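(* Let $\mathbb{X}$ be a real reflexive Kadets-Klee Banach space and $\mathbb{Y}$ a real normed linear space, and let $T\in\mathbb{K}(\mathbb{X},\mathbb{Y})$. Then $T$ is a smooth point of $\mathbb{B}(\mathbb{X},\mathbb{Y})$ if and only if $T$ is a smooth point of $\mathbb{K}(\mathbb{X},\mathbb{Y})$.
   Context: $\mathbb{B}(\mathbb{X},\mathbb{Y})$ and its subspace $\mathbb{K}(\mathbb{X},\mathbb{Y})$ of compact operators carry the operator norm. A nonzero element $x$ of a normed space $\mathbb{Z}$ is smooth if there is a unique $f\in\mathbb{Z}^*$ with $\|f\|=1$ and $f(x)=\|x\|$. A normed space $\mathbb{X}$ is Kadets-Klee if whenever $x_n\to x$ weakly and $\|x_n\|\to\|x\|$, then $\|x_n-x\|\to0$. *)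

(* Defs.v *)
From Stdlib Require Import Reals ClassicalEpsilon.
Open Scope R_scope.
Set Implicit Arguments.

Record NormedSpace := {
  carrier :> Type;
  zero : carrier;
  add : carrier -> carrier -> carrier;
  opp : carrier -> carrier;
  scal : R -> carrier -> carrier;
  norm : carrier -> R;
  add_assoc : forall x y z, add x (add y z) = add (add x y) z;
  add_comm : forall x y, add x y = add y x;
  add_zero : forall x, add zero x = x;
  add_opp : forall x, add x (opp x) = zero;
  scal_one : forall x, scal 1 x = x;
  scal_assoc : forall a b x, scal a (scal b x) = scal (a * b) x;
  scal_distr_l : forall a x y, scal a (add x y) = add (scal a x) (scal a y);
  scal_distr_r : forall a b x, scal (a + b) x = add (scal a x) (scal b x);
  norm_eq_zero : forall x, norm x = 0 -> x = zero;
  norm_scal : forall a x, norm (scal a x) = Rabs a * norm x;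
  norm_triangle : forall x y, norm (add x y) <= norm x + norm y
}.
Arguments zero {n}.
Arguments add {n}.
Arguments opp {n}.
Arguments scal {n}.
Arguments norm {n}.

Definition sub {X : NormedSpace} (x y : X) : X := add x (opp y).

(** Supremum of a set of reals (meaningful when the set is nonempty and bounded). *)
Definition sup_R (E : R -> Prop) : R := epsilon (inhabits 0) (fun m => is_lub E m).

Definition banach (X : NormedSpace) : Prop :=
  forall u : nat -> X,
    (forall eps, eps > 0 -> exists N, forall n m, (n >= N)%nat -> (m >= N)%nat ->
        norm (sub (u n) (u m)) < eps) ->
    exists x : X, Un_cv (fun n => norm (sub (u n) x)) 0.

Definition linear_map {X Y : NormedSpace} (T : X -> Y) : Prop :=
  (forall x y, T (add x y) = add (T x) (T y)) /\ (forall a x, T (scal a x) = scal a (T x)).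

Definition bounded_linear {X Y : NormedSpace} (T : X -> Y) : Prop :=
  linear_map T /\ exists C, forall x, norm (T x) <= C * norm x.

Definition opnorm {X Y : NormedSpace} (T : X -> Y) : R :=
  sup_R (fun t => exists x : X, norm x <= 1 /\ t = norm (T x)).

Definition linear_functional {X : NormedSpace} (f : X -> R) : Prop :=
  (forall x y, f (add x y) = f x + f y) /\ (forall a x, f (scal a x) = a * f x).

Definition dual_elt {X : NormedSpace} (f : X -> R) : Prop :=
  linear_functional f /\ exists C, forall x, Rabs (f x) <= C * norm x.

Definition dual_norm {X : NormedSpace} (f : X -> R) : R :=
  sup_R (fun t => exists x : X, norm x <= 1 /\ t = Rabs (f x)).

(** Reflexivity: the canonical embedding X -> X^** is onto. *)
Definition reflexive (X : NormedSpace) : Prop :=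
  forall phi : (X -> R) -> R,
    (forall f g, dual_elt f -> dual_elt g -> phi (fun x => f x + g x) = phi f + phi g) ->
    (forall a f, dual_elt f -> phi (fun x => a * f x) = a * phi f) ->
    (exists C, forall f, dual_elt f -> Rabs (phi f) <= C * dual_norm f) ->
    exists x : X, forall f, dual_elt f -> phi f = f x.

Definition weak_cv {X : NormedSpace} (u : nat -> X) (x : X) : Prop :=
  forall f, dual_elt f -> Un_cv (fun n => f (u n)) (f x).

Definition kadets_klee (X : NormedSpace) : Prop :=
  forall (u : nat -> X) (x : X),
    weak_cv u x -> Un_cv (fun n => norm (u n)) (norm x) ->
    Un_cv (fun n => norm (sub (u n) x)) 0.

(** Compact operators: bounded linear maps sending the closed unit ball to a
    relatively compact set (sequential characterisation in the metric space Y). *)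
Definition compact_op {X Y : NormedSpace} (T : X -> Y) : Prop :=
  bounded_linear T /\
  forall u : nat -> X, (forall n, norm (u n) <= 1) ->
    exists (phi : nat -> nat) (y : Y),
      (forall n, (phi n < phi (S n))%nat) /\
      Un_cv (fun n => norm (sub (T (u (phi n))) y)) 0.

Definition op_add {X Y : NormedSpace} (A B : X -> Y) : X -> Y := fun x => add (A x) (B x).
Definition op_scal {X Y : NormedSpace} (a : R) (A : X -> Y) : X -> Y := fun x => scal a (A x).

(** Functionals on [S]
    are represented by functions on (X -> Y), only their values on [S] matter. *)
Definition support_functional {X Y : NormedSpace} (S : (X -> Y) -> Prop)
    (T : X -> Y) (f : (X -> Y) -> R) : Prop :=
  (forall A B, S A -> S B -> f (op_add A B) = f A + f B) /\
  (forall a A, S A -> f (op_scal a A) = a * f A) /\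
  (exists C, forall A, S A -> Rabs (f A) <= C * opnorm A) /\
  sup_R (fun t => exists A, S A /\ opnorm A <= 1 /\ t = Rabs (f A)) = 1 /\
  f T = opnorm T.

Definition smooth_in {X Y : NormedSpace} (S : (X -> Y) -> Prop) (T : X -> Y) : Prop :=
  S T /\ (exists x, T x <> zero) /\
  (exists f, support_functional S T f) /\
  (forall f g, support_functional S T f -> support_functional S T g ->
     forall A, S A -> f A = g A).

(* Main.v *)
Require Import Defs.
From Stdlib Require Import Reals Lra Lia ClassicalEpsilon Classical FunctionalExtensionality PropExtensionality.
Open Scope R_scope.

Lemma sup_R_spec E : (exists m, is_lub E m) -> is_lub E (sup_R E).
Proof. intros H. unfold sup_R. apply epsilon_spec. exact H. Qed.

Lemma lub_unique E a b : is_lub E a -> is_lub E b -> a = b.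
Proof. intros [Ha1 Ha2] [Hb1 Hb2]. apply Rle_antisym; auto. Qed.

Lemma lub_exists E : (exists x, E x) -> (exists b, forall x, E x -> x <= b) -> exists m, is_lub E m.
Proof.
  intros Hn [b Hb]. destruct (completeness E) as [m Hm].
  - exists b. intros x Hx. auto.
  - exact Hn.
  - exists m; exact Hm.
Qed.

Definition is_glb (E : R -> Prop) (m : R) :=
  (forall x, E x -> m <= x) /\ (forall b, (forall x, E x -> b <= x) -> b <= m).
Definition inf_R (E : R -> Prop) : R := epsilon (inhabits 0) (is_glb E).

Lemma glb_exists E : (exists x, E x) -> (exists b, forall x, E x -> b <= x) -> exists m, is_glb E m.
Proof.
  intros [x0 Hx0] [b Hb].
  destruct (completeness (fun y => E (-y))) as [m [H1 H2]].
  - exists (-b). intros y Hy. specialize (Hb _ Hy). lra.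
  - exists (-x0). rewrite Ropp_involutive. exact Hx0.
  - exists (-m). split.
    + intros x Ex. assert (E (- - x)) by (rewrite Ropp_involutive; exact Ex).
      specialize (H1 _ H). lra.
    + intros c Hc. assert (m <= -c). { apply H2. intros y Hy. specialize (Hc _ Hy). lra. }
      lra.
Qed.

Lemma inf_R_spec E : (exists m, is_glb E m) -> is_glb E (inf_R E).
Proof. intros H. unfold inf_R. apply epsilon_spec. exact H. Qed.

Lemma extract (P : nat -> nat -> Prop) :
  (forall k N, exists n, (n >= N)%nat /\ P k n) ->
  exists phi : nat -> nat, (forall k, (phi k < phi (S k))%nat) /\ forall k, P k (phi k).
Proof.
  intros H.
  pose (g := fun k N => proj1_sig (constructive_indefinite_description _ (H k N))).
  assert (Hg : forall k N, (g k N >= N)%nat /\ P k (g k N)).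
  { intros k N. unfold g. apply (proj2_sig (constructive_indefinite_description _ (H k N))). }
  pose (phi := fix f (k : nat) : nat := match k with O => g O O | S k' => g (S k') (S (f k')) end).
  exists phi. split.
  - intros k. simpl. destruct (Hg (S k) (S (phi k))). lia.
  - intros k. destruct k; simpl; apply Hg.
Qed.

Lemma strict_ge (phi : nat -> nat) : (forall k, (phi k < phi (S k))%nat) -> forall n, (phi n >= n)%nat.
Proof. intros H n. induction n. lia. specialize (H n). lia. Qed.

Lemma strict_mono (phi : nat -> nat) : (forall k, (phi k < phi (S k))%nat) ->
  forall m n, (m < n)%nat -> (phi m < phi n)%nat.
Proof.
  intros H m n Hmn. induction n. lia.
  destruct (Nat.eq_dec m n). subst. apply H. specialize (H n). assert (m < n)%nat by lia. specialize (IHn H0). lia.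
Qed.

Lemma strict_comp (phi psi : nat -> nat) : (forall k, (phi k < phi (S k))%nat) ->
  (forall k, (psi k < psi (S k))%nat) -> forall k, (phi (psi k) < phi (psi (S k)))%nat.
Proof. intros H1 H2 k. apply strict_mono; auto. Qed.

Lemma subseq_cv (u : nat -> R) l phi : (forall k, (phi k < phi (S k))%nat) -> Un_cv u l ->
  Un_cv (fun k => u (phi k)) l.
Proof.
  intros Hp Hu eps He. destruct (Hu eps He) as [N HN]. exists N. intros n Hn.
  apply HN. pose proof (strict_ge phi Hp n). lia.
Qed.

Definition chain {E : Type} (le : E -> E -> Prop) (C : E -> Prop) :=
  forall x y, C x -> C y -> le x y \/ le y x.

Section BW.
Variable E : Type.
Variable le : E -> E -> Prop.
Variable P : E -> Prop.
Variable b : E.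
Variable f : E -> E.
Variable sup : (E -> Prop) -> E.
Hypothesis le_refl : forall x, P x -> le x x.
Hypothesis le_trans : forall x y z, le x y -> le y z -> le x z.
Hypothesis le_antisym : forall x y, P x -> P y -> le x y -> le y x -> x = y.
Hypothesis Pb : P b.
Hypothesis Pf : forall x, P x -> P (f x).
Hypothesis le_f : forall x, P x -> le x (f x).
Hypothesis Psup : forall C, (forall x, C x -> P x) -> chain le C -> (exists x, C x) -> P (sup C).
Hypothesis sup_ub : forall C, (forall x, C x -> P x) -> chain le C -> (exists x, C x) ->
  forall x, C x -> le x (sup C).
Hypothesis sup_least : forall C u, (forall x, C x -> P x) -> chain le C -> (exists x, C x) ->
  P u -> (forall x, C x -> le x u) -> le (sup C) u.

Inductive Tw : E -> Prop :=
| Tw_b : Tw b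
| Tw_f : forall x, Tw x -> Tw (f x)
| Tw_sup : forall C, (forall x, C x -> Tw x) -> chain le C -> (exists x, C x) -> Tw (sup C).

Lemma Tw_P : forall x, Tw x -> P x.
Proof. intros x H. induction H; auto. Qed.

Lemma Tw_b_le : forall x, Tw x -> le b x.
Proof.
  intros x H. induction H.
  - auto.
  - eapply le_trans. exact IHTw. apply le_f. apply Tw_P; auto.
  - destruct H2 as [c Hc]. eapply le_trans. apply H0; exact Hc.
    apply sup_ub; auto. intros; apply Tw_P; auto. exists c; auto.
Qed.

Definition extreme c := forall x, Tw x -> le x c -> x <> c -> le (f x) c.

Lemma lemA : forall c, Tw c -> extreme c -> forall x, Tw x -> le x c \/ le (f c) x.
Proof.
  intros c Hc Hext x Hx. induction Hx.
  - left. apply Tw_b_le; auto.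
  - destruct IHHx as [H | H].
    + destruct (classic (x = c)) as [->|Hne].
      * right. apply le_refl. apply Pf. apply Tw_P; auto.
      * left. apply Hext; auto.
    + right. eapply le_trans. exact H. apply le_f. apply Tw_P; auto.
  - destruct (classic (exists x, C x /\ le (f c) x)) as [[y [Hy1 Hy2]] | Hno].
    + right. eapply le_trans. exact Hy2. apply sup_ub; auto. intros; apply Tw_P; auto.
    + left. apply sup_least; auto. intros; apply Tw_P; auto. apply Tw_P; auto.
      intros y Hy. destruct (H0 y Hy) as [H3|H3]; auto. exfalso; apply Hno; eauto.
Qed.

Lemma lemB : forall c, Tw c -> extreme c.
Proof.
  intros c Hc. induction Hc.
  - intros x Hx H1 H2. exfalso. apply H2. apply le_antisym; auto. apply Tw_P; auto.
    apply Tw_b_le; auto.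
  - intros y Hy H1 H2. destruct (lemA x Hc IHHc y Hy) as [H|H].
    + destruct (classic (y = x)) as [->|Hne].
      * apply le_refl. apply Pf. apply Tw_P; auto.
      * eapply le_trans. apply IHHc; auto. apply le_f. apply Tw_P; auto.
    + exfalso. apply H2. apply le_antisym; auto. apply Tw_P; auto. apply Pf, Tw_P; auto.
  - assert (HTs : Tw (sup C)) by (apply Tw_sup; auto).
    assert (HCP : forall x, C x -> P x) by (intros; apply Tw_P; auto).
    intros x Hx H3 H4.
    destruct (classic (forall y, C y -> le (f y) x)) as [Hall | Hnot].
    + exfalso. apply H4. apply le_antisym; [apply Tw_P; auto | apply Tw_P; auto | exact H3 | ].
      apply (sup_least C x HCP H1 H2 (Tw_P x Hx)).
      intros y Hy. eapply le_trans. apply le_f. apply HCP; auto. apply Hall; auto.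
    + apply not_all_ex_not in Hnot. destruct Hnot as [y Hy].
      apply imply_to_and in Hy. destruct Hy as [Hy1 Hy2].
      destruct (lemA y (H y Hy1) (H0 y Hy1) x Hx) as [Hxy|Hxy]; [|contradiction].
      destruct (classic (x = y)) as [->|Hne].
      * destruct (lemA y (H y Hy1) (H0 y Hy1) (sup C) HTs) as [Hs|Hs]; auto.
        exfalso. apply H4. apply le_antisym; [apply Tw_P; auto | apply Tw_P; auto | exact H3 | exact Hs].
      * eapply le_trans. apply (H0 y Hy1); auto. apply sup_ub; auto.
Qed.

Lemma Tw_chain : chain le Tw.
Proof.
  intros x y Hx Hy. destruct (lemA y Hy (lemB y Hy) x Hx) as [H|H]; auto.
  right. eapply le_trans. apply le_f. apply Tw_P; auto. exact H.
Qed.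

Theorem bourbaki_witt : exists m, P m /\ le (f m) m.
Proof.
  assert (Hm : Tw (sup Tw)) by (apply Tw_sup; auto; [apply Tw_chain | exists b; constructor]).
  exists (sup Tw). split. apply Tw_P; auto.
  apply sup_ub. apply Tw_P. apply Tw_chain. exists b; constructor. constructor; auto.
Qed.
End BW.

Record VS := {
  vc :> Type;
  v0 : vc;
  vadd : vc -> vc -> vc;
  vopp : vc -> vc;
  vscal : R -> vc -> vc;
  vadd_assoc : forall x y z, vadd x (vadd y z) = vadd (vadd x y) z;
  vadd_comm : forall x y, vadd x y = vadd y x;
  vadd_zero : forall x, vadd v0 x = x;
  vadd_opp : forall x, vadd x (vopp x) = v0;
  vscal_one : forall x, vscal 1 x = x;
  vscal_assoc : forall a b x, vscal a (vscal b x) = vscal (a * b) x;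
  vscal_distr_l : forall a x y, vscal a (vadd x y) = vadd (vscal a x) (vscal a y);
  vscal_distr_r : forall a b x, vscal (a + b) x = vadd (vscal a x) (vscal b x)
}.
Arguments v0 {v}.
Arguments vadd {v}.
Arguments vopp {v}.
Arguments vscal {v}.

Section VSalg.
Variable V : VS.
Lemma add0r (x : V) : vadd x v0 = x.
Proof. rewrite vadd_comm. apply vadd_zero. Qed.
Lemma addI (a b c : V) : vadd a b = vadd a c -> b = c.
Proof.
  intros H. rewrite <- (vadd_zero V b), <- (vadd_zero V c).
  rewrite <- (vadd_opp V a). rewrite (vadd_comm V a (vopp a)).
  rewrite <- !vadd_assoc, H. reflexivity.
Qed.
Lemma scal0 (x : V) : vscal 0 x = v0.
Proof.
  apply (addI (vscal 0 x)). rewrite <- vscal_distr_r, Rplus_0_r, add0r. reflexivity.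
Qed.
Lemma scalv0 a : vscal a (@v0 V) = v0.
Proof.
  apply (addI (vscal a v0)). rewrite <- vscal_distr_l, vadd_zero, add0r. reflexivity.
Qed.
Lemma vACl (a b c d : V) : vadd (vadd a b) (vadd c d) = vadd (vadd a c) (vadd b d).
Proof.
  rewrite <- !vadd_assoc. f_equal. rewrite !vadd_assoc. f_equal. apply vadd_comm.
Qed.
Lemma scal_neg1 (x : V) : vadd x (vscal (-1) x) = v0.
Proof.
  rewrite <- (vscal_one V x) at 1. rewrite <- vscal_distr_r.
  replace (1 + -1) with 0 by ring. apply scal0.
Qed.
Lemma vopp_scal (x : V) : vopp x = vscal (-1) x.
Proof. apply (addI x). rewrite vadd_opp, scal_neg1. reflexivity. Qed.
End VSalg.

Definition sublinear {V : VS} (p : V -> R) :=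
  (forall x y, p (vadd x y) <= p x + p y) /\ (forall a x, 0 <= a -> p (vscal a x) = a * p x).

Definition subspace {V : VS} (D : V -> Prop) :=
  D v0 /\ (forall x y, D x -> D y -> D (vadd x y)) /\ (forall a x, D x -> D (vscal a x)).
Definition linD {V : VS} (D : V -> Prop) (g : V -> R) :=
  (forall x y, D x -> D y -> g (vadd x y) = g x + g y) /\ (forall a x, D x -> g (vscal a x) = a * g x).

Section HB.
Variable V : VS.
Variable p : V -> R.
Hypothesis p_add : forall x y, p (vadd x y) <= p x + p y.
Hypothesis p_scal : forall a x, 0 <= a -> p (vscal a x) = a * p x.

Lemma decomp_unique (D : V -> Prop) v x x' a a' : subspace D -> ~ D v -> D x -> D x' ->
  vadd x (vscal a v) = vadd x' (vscal a' v) -> x = x' /\ a = a'.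
Proof.
  intros [D0 [Dadd Dscal]] Hv Hx Hx' H.
  assert (K : vadd x (vscal (-1) x') = vscal (a' + - a) v).
  { assert (H2 := f_equal (fun w => vadd w (vadd (vscal (-1) x') (vscal (-a) v))) H). simpl in H2.
    rewrite (vACl _ x), (vACl _ x') in H2. rewrite <- !vscal_distr_r in H2. rewrite scal_neg1 in H2.
    replace (a + - a) with 0 in H2 by ring. rewrite scal0, add0r, vadd_zero in H2. exact H2. }
  assert (Ha : a = a').
  { destruct (Req_dec (a' + - a) 0) as [E|E]. lra. exfalso. apply Hv.
    replace v with (vscal (/ (a' + - a)) (vscal (a' + - a) v)).
    apply Dscal. rewrite <- K. apply Dadd; auto.
    rewrite vscal_assoc, Rinv_l by exact E. apply vscal_one. }
  subst a'. split; auto. replace (a + - a) with 0 in K by ring. rewrite scal0 in K.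
  apply (addI _ (vscal (-1) x')). rewrite (vadd_comm _ _ x), K, vadd_comm, scal_neg1. reflexivity.
Qed.

Lemma p0 : p v0 = 0.
Proof. rewrite <- (scal0 V v0) at 1. rewrite p_scal by lra. ring. Qed.

Definition Ext := ((V -> Prop) * (V -> R))%type.
Definition valid (e : Ext) := subspace (fst e) /\ linD (fst e) (snd e) /\
  (forall x, fst e x -> snd e x <= p x) /\ (forall x, ~ fst e x -> snd e x = 0).
Definition le_e (e1 e2 : Ext) := (forall x, fst e1 x -> fst e2 x) /\
  (forall x, fst e1 x -> snd e2 x = snd e1 x).

Lemma g0 e : valid e -> snd e v0 = 0.
Proof.
  intros [[D0 _] [[_ Hs] _]]. rewrite <- (scal0 V v0). rewrite Hs; auto. ring.
Qed.

Definition cst (e : Ext) (v : V) : R :=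
  sup_R (fun r => exists y, fst e y /\ r = snd e y - p (vadd y (vscal (-1) v))).

Lemma cst_prop e v : valid e ->
  (forall x, fst e x -> cst e v <= p (vadd x v) - snd e x) /\
  (forall y, fst e y -> snd e y - p (vadd y (vscal (-1) v)) <= cst e v).
Proof.
  intros He. pose proof He as [[D0 [Dadd Dscal]] [[Ladd Lscal] [Lp _]]].
  assert (Kq : forall x y, fst e x -> fst e y ->
     snd e y - p (vadd y (vscal (-1) v)) <= p (vadd x v) - snd e x).
  { intros x y Hx Hy. assert (E1 : snd e x + snd e y = snd e (vadd x y)) by (rewrite Ladd; auto).
    assert (E2 : snd e (vadd x y) <= p (vadd x y)) by auto.
    assert (E3 : vadd x y = vadd (vadd x v) (vadd y (vscal (-1) v))).
    { rewrite vACl, scal_neg1, add0r. reflexivity. }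
    assert (E4 : p (vadd x y) <= p (vadd x v) + p (vadd y (vscal (-1) v))) by (rewrite E3 at 1; apply p_add).
    lra. }
  assert (Hl : is_lub (fun r => exists y, fst e y /\ r = snd e y - p (vadd y (vscal (-1) v))) (cst e v)).
  { apply sup_R_spec. apply lub_exists.
    - exists (snd e v0 - p (vadd v0 (vscal (-1) v))). exists v0; auto.
    - exists (p (vadd v0 v) - snd e v0). intros r [y [Hy ->]]. apply Kq; auto. }
  destruct Hl as [Hub Hleast]. split.
  - intros x Hx. apply Hleast. intros r [y [Hy ->]]. apply Kq; auto.
  - intros y Hy. apply Hub. exists y; auto.
Qed.

Definition extD (e : Ext) v : V -> Prop := fun w => exists x a, fst e x /\ w = vadd x (vscal a v).
Definition extg (e : Ext) v : V -> R := fun w =>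
  if excluded_middle_informative (extD e v w) then
    epsilon (inhabits 0) (fun r => exists x a, fst e x /\ w = vadd x (vscal a v) /\ r = snd e x + a * cst e v)
  else 0.
Definition ext (e : Ext) v : Ext :=
  if excluded_middle_informative (fst e v) then e else (extD e v, extg e v).

Lemma extg_spec e v x a : valid e -> ~ fst e v -> fst e x ->
  extg e v (vadd x (vscal a v)) = snd e x + a * cst e v.
Proof.
  intros He Hv Hx. unfold extg.
  destruct (excluded_middle_informative _) as [H|H].
  2: { exfalso; apply H; exists x, a; auto. }
  match goal with |- epsilon ?i ?P = _ =>
    assert (Hex : exists r, P r) by (exists (snd e x + a * cst e v); exists x, a; auto);
    pose proof (epsilon_spec i P Hex) as Hs end.
  destruct Hs as (x1 & a1 & Hx1 & Heq & Hr). rewrite Hr.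
  destruct (decomp_unique (fst e) v x x1 a a1) as [-> ->]; auto. apply He.
Qed.

Lemma ext_ok e v : valid e -> ~ fst e v ->
  valid (extD e v, extg e v) /\ le_e e (extD e v, extg e v) /\ extD e v v.
Proof.
  intros He Hv. pose proof He as [[D0 [Dadd Dscal]] [[Ladd Lscal] [Lp Lz]]].
  destruct (cst_prop e v He) as [C1 C2].
  assert (Hx0 : forall x, vadd x (vscal 0 v) = x) by (intros; rewrite scal0, add0r; auto).
  assert (Ssum : forall x1 x2 a1 a2, vadd (vadd x1 (vscal a1 v)) (vadd x2 (vscal a2 v))
                   = vadd (vadd x1 x2) (vscal (a1 + a2) v)).
  { intros. rewrite vACl, vscal_distr_r. reflexivity. }
  assert (Sscal : forall b x a, vscal b (vadd x (vscal a v)) = vadd (vscal b x) (vscal (b * a) v)).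
  { intros. rewrite vscal_distr_l, vscal_assoc. reflexivity. }
  split; [|split].
  - split; [|split; [|split]]; simpl.
    + split; [|split].
      * exists v0, 0. rewrite Hx0. auto.
      * intros w1 w2 (x1 & a1 & H1 & ->) (x2 & a2 & H2 & ->). exists (vadd x1 x2), (a1 + a2).
        split; auto.
      * intros b w (x & a & H1 & ->). exists (vscal b x), (b * a). split; auto.
    + split.
      * intros w1 w2 (x1 & a1 & H1 & ->) (x2 & a2 & H2 & ->). rewrite Ssum.
        rewrite !extg_spec; auto. rewrite Ladd; auto. ring.
      * intros b w (x & a & H1 & ->). rewrite Sscal. rewrite !extg_spec; auto. rewrite Lscal; auto. ring.
    + intros w (x & a & H1 & ->). rewrite extg_spec; auto.
      destruct (Rtotal_order a 0) as [Hneg | [Hz | Hpos]].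
      * set (b := - a).
        assert (E : vadd x (vscal a v) = vscal b (vadd (vscal (/ b) x) (vscal (-1) v))).
        { rewrite vscal_distr_l, !vscal_assoc. unfold b. rewrite Rinv_r by lra.
          rewrite vscal_one. f_equal. f_equal. ring. }
        rewrite E, p_scal by (unfold b; lra).
        specialize (C2 (vscal (/ b) x) (Dscal _ _ H1)). rewrite Lscal in C2 by auto.
        replace (snd e x + a * cst e v) with (b * (/ b * snd e x - cst e v)).
        2: { unfold b. field. lra. }
        apply Rmult_le_compat_l. unfold b; lra. lra.
      * subst a. rewrite Hx0. rewrite Rmult_0_l, Rplus_0_r. auto.
      * assert (E : vadd x (vscal a v) = vscal a (vadd (vscal (/ a) x) v)).
        { rewrite vscal_distr_l, !vscal_assoc. rewrite Rinv_r by lra. rewrite vscal_one. reflexivity. }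
        rewrite E, p_scal by lra.
        specialize (C1 (vscal (/ a) x) (Dscal _ _ H1)). rewrite Lscal in C1 by auto.
        replace (snd e x + a * cst e v) with (a * (/ a * snd e x + cst e v)) by (field; lra).
        apply Rmult_le_compat_l; lra.
    + intros w Hw. unfold extg. destruct (excluded_middle_informative _); [contradiction | auto].
  - split; simpl.
    + intros x Hx. exists x, 0. rewrite Hx0. auto.
    + intros x Hx. rewrite <- (Hx0 x) at 1. rewrite extg_spec; auto. ring.
  - simpl. exists v0, 1. split; auto. rewrite vscal_one, vadd_zero. auto.
Qed.

Definition supD (C : Ext -> Prop) : V -> Prop := fun w => exists e, C e /\ fst e w.
Definition supg (C : Ext -> Prop) : V -> R := fun w =>
  if excluded_middle_informative (supD C w) then
    epsilon (inhabits 0) (fun r => exists e, C e /\ fst e w /\ r = snd e w)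
  else 0.
Definition supe C : Ext := (supD C, supg C).

Lemma supg_spec C e w : chain le_e C -> C e -> fst e w -> supg C w = snd e w.
Proof.
  intros Hc He Hw. unfold supg. destruct (excluded_middle_informative _) as [H|H].
  2: { exfalso; apply H; exists e; auto. }
  match goal with |- epsilon ?i ?P = _ =>
    assert (Hex : exists r, P r) by (exists (snd e w); exists e; auto);
    pose proof (epsilon_spec i P Hex) as Hs end.
  destruct Hs as (e1 & He1 & Hw1 & Hr). rewrite Hr.
  destruct (Hc e e1 He He1) as [[_ L] | [_ L]]; auto. symmetry; auto.
Qed.

Lemma chain_common C e1 e2 w1 w2 : chain le_e C -> C e1 -> C e2 -> fst e1 w1 -> fst e2 w2 ->
  exists e, C e /\ fst e w1 /\ fst e w2.
Proof.
  intros Hc H1 H2 Hw1 Hw2. destruct (Hc e1 e2 H1 H2) as [[L _] | [L _]].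
  - exists e2; auto.
  - exists e1; auto.
Qed.

Theorem HB0 : exists F : V -> R, (forall x y, F (vadd x y) = F x + F y) /\
  (forall a x, F (vscal a x) = a * F x) /\ (forall x, F x <= p x).
Proof.
  pose (fe := fun e : Ext => ext e (epsilon (inhabits v0) (fun v => ~ fst e v))).
  pose (b := ((fun w : V => w = v0), (fun _ : V => 0)) : Ext).
  destruct (bourbaki_witt Ext le_e valid b fe supe) as [m [Hm Hle]].
  - intros x _. split; auto.
  - intros x y z [A1 B1] [A2 B2]. split; auto. intros w Hw. rewrite B2; auto.
  - intros [D1 g1] [D2 g2] Hv1 [_ [_ [_ Z2]]] [A1 B1] [A2 B2]. simpl in *.
    assert (ED : D1 = D2).
    { apply functional_extensionality. intros w. apply propositional_extensionality. split; auto. }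
    subst D2. f_equal. apply functional_extensionality. intros w.
    destruct (classic (D1 w)). apply B2; auto.
    destruct Hv1 as [_ [_ [_ Z1]]]. simpl in Z1. rewrite Z1, Z2; auto.
  - split; [|split; [|split]]; simpl.
    + split; [auto|split].
      * intros x y -> ->. apply vadd_zero.
      * intros a x ->. apply scalv0.
    + split; intros; simpl; ring.
    + intros x ->. rewrite p0. lra.
    + auto.
  - intros x Hx. unfold fe, ext. destruct (excluded_middle_informative _); auto. apply ext_ok; auto.
  - intros x Hx. unfold fe, ext. destruct (excluded_middle_informative _).
    + split; auto.
    + apply ext_ok; auto.
  - intros C HP Hc [e0 He0]. unfold supe.
    split; [|split; [|split]]; simpl.
    + split; [|split].
      * exists e0. split; auto. apply (HP e0 He0).
      * intros w1 w2 (e1 & H1 & Hw1) (e2 & H2 & Hw2).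
        destruct (chain_common C e1 e2 w1 w2 Hc H1 H2 Hw1 Hw2) as (e & He & A & B).
        exists e. split; auto. apply (HP e He); auto.
      * intros a w (e & He & Hw). exists e. split; auto. apply (HP e He); auto.
    + split.
      * intros w1 w2 (e1 & H1 & Hw1) (e2 & H2 & Hw2).
        destruct (chain_common C e1 e2 w1 w2 Hc H1 H2 Hw1 Hw2) as (e & He & A & B).
        destruct (HP e He) as [[_ [Da _]] [[La _] _]].
        rewrite !(supg_spec C e) by auto. apply La; auto.
      * intros a w (e & He & Hw). destruct (HP e He) as [[_ [_ Ds]] [[_ Ls] _]].
        rewrite !(supg_spec C e) by auto. apply Ls; auto.
    + intros w (e & He & Hw). rewrite (supg_spec C e) by auto. apply (HP e He); auto.
    + intros w Hw. unfold supg. destruct (excluded_middle_informative _); [contradiction|auto].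
  - intros C HP Hc Hne x Hx. unfold supe. split; simpl.
    + intros w Hw. exists x; auto.
    + intros w Hw. apply supg_spec; auto.
  - intros C u HP Hc Hne Hu Hub. unfold supe. split; simpl.
    + intros w (e & He & Hw). apply (Hub e He); auto.
    + intros w (e & He & Hw). rewrite (supg_spec C e) by auto. apply (Hub e He); auto.
  - exists (snd m). pose proof Hm as [Hs [[La Ls] [Lp _]]].
    assert (Hall : forall w, fst m w).
    { intros w. apply NNPP. intros Hw.
      assert (Hv : ~ fst m (epsilon (inhabits v0) (fun v => ~ fst m v))).
      { apply (epsilon_spec (inhabits v0) (fun v => ~ fst m v)). exists w; auto. }
      destruct Hle as [L _]. unfold fe, ext in L.
      destruct (excluded_middle_informative _); [contradiction|].
      apply Hv. apply L. apply (ext_ok m _ Hm Hv). }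
    split; [|split]; intros; auto.
Qed.
End HB.

Lemma div_le a b s : 0 < s -> a <= b * s -> a / s <= b.
Proof. intros Hs H. unfold Rdiv. apply (Rmult_le_reg_r s); auto. rewrite Rmult_assoc, Rinv_l by lra. lra. Qed.
Lemma le_div a b s : 0 < s -> b * s <= a -> b <= a / s.
Proof. intros Hs H. unfold Rdiv. apply (Rmult_le_reg_r s); auto. rewrite Rmult_assoc, Rinv_l by lra. lra. Qed.

Section DD.
Variable V : VS.
Variable p : V -> R.
Hypothesis p_add : forall x y, p (vadd x y) <= p x + p y.
Hypothesis p_scal : forall a x, 0 <= a -> p (vscal a x) = a * p x.
Variable y : V.

Definition qd (w : V) (s : R) := (p (vadd y (vscal s w)) - p y) / s.
Definition dd (w : V) := inf_R (fun r => exists s, s > 0 /\ r = qd w s).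

Lemma vrearr (a b c : V) : vadd (vadd a b) c = vadd (vadd a c) b.
Proof. rewrite <- !vadd_assoc. f_equal. apply vadd_comm. Qed.

Lemma qd_lb w s : s > 0 -> - p (vscal (-1) w) <= qd w s.
Proof.
  intros Hs. unfold qd. apply le_div; auto.
  assert (E : y = vadd (vadd y (vscal s w)) (vscal s (vscal (-1) w))).
  { rewrite vscal_assoc, <- vadd_assoc, <- vscal_distr_r. replace (s + s * -1) with 0 by ring.
    rewrite scal0, add0r. auto. }
  assert (H := p_add (vadd y (vscal s w)) (vscal s (vscal (-1) w))).
  rewrite <- E in H. rewrite p_scal in H by lra. lra.
Qed.

Lemma qd_mono w s s' : 0 < s -> s <= s' -> qd w s <= qd w s'.
Proof.
  intros Hs Hss. set (r := s / s').
  assert (Hr0 : 0 <= r) by (unfold r; apply Rlt_le, Rdiv_lt_0_compat; lra).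
  assert (Hr1 : r <= 1) by (unfold r; apply div_le; lra).
  assert (E : vadd y (vscal s w) = vadd (vscal r (vadd y (vscal s' w))) (vscal (1 - r) y)).
  { rewrite vscal_distr_l, vscal_assoc, vrearr, <- vscal_distr_r.
    replace (r + (1 - r)) with 1 by ring. rewrite vscal_one. f_equal. f_equal.
    unfold r. field. lra. }
  assert (H := p_add (vscal r (vadd y (vscal s' w))) (vscal (1 - r) y)).
  rewrite <- E in H. rewrite !p_scal in H by lra.
  unfold qd. apply div_le; auto. unfold Rdiv.
  replace ((p (vadd y (vscal s' w)) - p y) * / s' * s) with (r * (p (vadd y (vscal s' w)) - p y)).
  2: { unfold r. field. lra. }
  lra.
Qed.

Lemma dd_glb w : is_glb (fun r => exists s, s > 0 /\ r = qd w s) (dd w).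
Proof.
  apply inf_R_spec. apply glb_exists.
  - exists (qd w 1). exists 1; split; auto; lra.
  - exists (- p (vscal (-1) w)). intros r [s [Hs ->]]. apply qd_lb; auto.
Qed.

Lemma dd_le w s : s > 0 -> dd w <= qd w s.
Proof. intros Hs. apply (proj1 (dd_glb w)). exists s; auto. Qed.

Lemma dd_ge w c : (forall s, s > 0 -> c <= qd w s) -> c <= dd w.
Proof. intros H. apply (proj2 (dd_glb w)). intros r [s [Hs ->]]. auto. Qed.

Lemma dd_approx w eps : eps > 0 -> exists s, s > 0 /\ qd w s < dd w + eps.
Proof.
  intros He. apply NNPP. intros Hn.
  assert (dd w + eps <= dd w). { apply dd_ge. intros s Hs. apply Rnot_lt_le. intros Hl. apply Hn. eauto. }
  lra.
Qed.

Lemma dd_add w1 w2 : dd (vadd w1 w2) <= dd w1 + dd w2.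
Proof.
  apply le_epsilon. intros eps He.
  destruct (dd_approx w1 (eps/2)) as [s1 [Hs1 Q1]]; [lra|].
  destruct (dd_approx w2 (eps/2)) as [s2 [Hs2 Q2]]; [lra|].
  set (s := Rmin s1 s2 / 2).
  assert (Hm : 0 < Rmin s1 s2) by (apply Rmin_glb_lt; lra).
  assert (Hs : s > 0) by (unfold s; lra).
  assert (M1 : qd w1 (2 * s) <= qd w1 s1) by (apply qd_mono; unfold s; pose proof (Rmin_l s1 s2); lra).
  assert (M2 : qd w2 (2 * s) <= qd w2 s2) by (apply qd_mono; unfold s; pose proof (Rmin_r s1 s2); lra).
  assert (K : qd (vadd w1 w2) s <= qd w1 (2 * s) + qd w2 (2 * s)).
  { assert (E : vadd y (vscal s (vadd w1 w2)) =
       vadd (vscal (/2) (vadd y (vscal (2 * s) w1))) (vscal (/2) (vadd y (vscal (2 * s) w2)))).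
    { rewrite !vscal_distr_l, !vscal_assoc, vACl, <- vscal_distr_r.
      replace (/2 + /2) with 1 by field. rewrite vscal_one. f_equal.
      replace (/ 2 * (2 * s)) with s by field. auto. }
    assert (H := p_add (vscal (/2) (vadd y (vscal (2 * s) w1))) (vscal (/2) (vadd y (vscal (2 * s) w2)))).
    rewrite <- E in H. rewrite !p_scal in H by lra.
    unfold qd. apply div_le; auto.
    replace (((p (vadd y (vscal (2 * s) w1)) - p y) / (2 * s) + (p (vadd y (vscal (2 * s) w2)) - p y) / (2 * s)) * s)
      with (/2 * (p (vadd y (vscal (2 * s) w1)) - p y) + /2 * (p (vadd y (vscal (2 * s) w2)) - p y)) by (field; lra).
    lra. }
  pose proof (dd_le (vadd w1 w2) s Hs). lra.
Qed.

Lemma p_zero : p v0 = 0.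
Proof. rewrite <- (scal0 V v0) at 1. rewrite p_scal by lra. ring. Qed.

Lemma dd_hom a w : 0 <= a -> dd (vscal a w) = a * dd w.
Proof.
  intros Ha. destruct (Req_dec a 0) as [->|Hna].
  - rewrite scal0, Rmult_0_l.
    assert (Q : forall s, s > 0 -> qd v0 s = 0).
    { intros s Hs. unfold qd. rewrite scalv0, add0r. unfold Rdiv. ring. }
    apply Rle_antisym.
    + rewrite <- (Q 1) by lra. apply dd_le; lra.
    + apply dd_ge. intros s Hs. rewrite Q; lra.
  - assert (Q : forall s, s > 0 -> qd (vscal a w) s = a * qd w (a * s)).
    { intros s Hs. unfold qd. rewrite vscal_assoc. rewrite (Rmult_comm s a). field. lra. }
    apply Rle_antisym.
    + assert (dd (vscal a w) / a <= dd w).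
      { apply dd_ge. intros s Hs. apply div_le. lra.
        assert (Hsa : s / a > 0) by (apply Rdiv_lt_0_compat; lra).
        assert (E : qd w s * a = qd (vscal a w) (s / a)).
        { rewrite Q by exact Hsa. replace (a * (s / a)) with s by (field; lra). ring. }
        rewrite E. apply dd_le. exact Hsa. }
      apply (Rmult_le_compat_l a) in H; [|lra].
      replace (a * (dd (vscal a w) / a)) with (dd (vscal a w)) in H by (field; lra). lra.
    + apply dd_ge. intros s Hs. rewrite Q by auto. apply Rmult_le_compat_l; [lra|].
      apply dd_le. apply Rmult_lt_0_compat; lra.
Qed.

Lemma dd_le_p w : dd w <= p w.
Proof.
  eapply Rle_trans. apply (dd_le w 1); lra. unfold qd. rewrite vscal_one.
  pose proof (p_add y w). unfold Rdiv. rewrite Rinv_1. lra.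
Qed.

Lemma dd_y : dd y = p y.
Proof.
  assert (Q : forall s, s > 0 -> qd y s = p y).
  { intros s Hs. unfold qd.
    replace (vadd y (vscal s y)) with (vscal (1 + s) y) by (rewrite vscal_distr_r, vscal_one; auto).
    rewrite p_scal by lra. field. lra. }
  apply Rle_antisym.
  - rewrite <- (Q 1) by lra. apply dd_le; lra.
  - apply dd_ge. intros s Hs. rewrite Q; auto. lra.
Qed.

Lemma dd_my : dd (vscal (-1) y) = - p y.
Proof.
  apply Rle_antisym.
  - assert (Q : qd (vscal (-1) y) (1/2) = - p y).
    { unfold qd. replace (vadd y (vscal (1/2) (vscal (-1) y))) with (vscal (1/2) y).
      rewrite p_scal by lra. field.
      rewrite vscal_assoc. rewrite <- (vscal_one V y) at 2. rewrite <- vscal_distr_r. f_equal. field. }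
    rewrite <- Q. apply dd_le; lra.
  - apply dd_ge. intros s Hs. pose proof (qd_lb (vscal (-1) y) s Hs).
    rewrite vscal_assoc in H. replace (-1 * -1) with 1 in H by ring. rewrite vscal_one in H. exact H.
Qed.
End DD.

Theorem HBpoint (V : VS) (p : V -> R) (y : V) : sublinear p ->
  exists F : V -> R, (forall x z, F (vadd x z) = F x + F z) /\
  (forall a x, F (vscal a x) = a * F x) /\ (forall x, F x <= p x) /\ F y = p y.
Proof.
  intros [Hadd Hscal].
  destruct (HB0 V (dd V p y)) as [F [Fa [Fs Fle]]].
  - intros. apply dd_add; auto.
  - intros. apply dd_hom; auto.
  - exists F. split; [|split; [|split]]; auto.
    + intros x. eapply Rle_trans. apply Fle. apply dd_le_p; auto.
    + apply Rle_antisym.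
      * rewrite <- (dd_y V p Hadd Hscal y). apply Fle.
      * pose proof (Fle (vscal (-1) y)). rewrite Fs, dd_my in H; auto. lra.
Qed.

Definition NV (X : NormedSpace) : VS :=
  {| vc := X; v0 := zero; vadd := add; vopp := opp; vscal := scal;
     vadd_assoc := add_assoc X; vadd_comm := add_comm X; vadd_zero := add_zero X;
     vadd_opp := add_opp X; vscal_one := scal_one X; vscal_assoc := scal_assoc X;
     vscal_distr_l := scal_distr_l X; vscal_distr_r := scal_distr_r X |}.

Lemma Rabs_le_between a b : Rabs a <= b -> - b <= a <= b.
Proof. unfold Rabs. destruct (Rcase_abs a); intros; lra. Qed.

Lemma Rabs_m1 : Rabs (-1) = 1.
Proof. rewrite Rabs_left; lra. Qed.

Section NormBasics.
Variable X : NormedSpace.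
Lemma n_scal0 (x : X) : scal 0 x = zero.
Proof. exact (scal0 (NV X) x). Qed.
Lemma n_scalv0 a : scal a (@zero X) = zero.
Proof. exact (scalv0 (NV X) a). Qed.
Lemma n_opp (x : X) : opp x = scal (-1) x.
Proof. exact (vopp_scal (NV X) x). Qed.
Lemma n_add0r (x : X) : add x zero = x.
Proof. exact (add0r (NV X) x). Qed.
Lemma n_addI (a b c : X) : add a b = add a c -> b = c.
Proof. exact (addI (NV X) a b c). Qed.
Lemma n_ACl (a b c d : X) : add (add a b) (add c d) = add (add a c) (add b d).
Proof. exact (vACl (NV X) a b c d). Qed.
Lemma n_neg1 (x : X) : add x (scal (-1) x) = zero.
Proof. exact (scal_neg1 (NV X) x). Qed.
Lemma norm_zero : norm (@zero X) = 0.
Proof. rewrite <- (n_scal0 zero). rewrite norm_scal, Rabs_R0. ring. Qed.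
Lemma norm_nonneg (x : X) : 0 <= norm x.
Proof.
  pose proof (norm_triangle X x (scal (-1) x)). rewrite n_neg1, norm_zero, norm_scal in H.
  rewrite Rabs_m1 in H. lra.
Qed.
Lemma norm_neg (x : X) : norm (scal (-1) x) = norm x.
Proof. rewrite norm_scal, Rabs_m1. ring. Qed.
Lemma norm_sublinear : @sublinear (NV X) (@norm X).
Proof.
  split.
  - intros. apply norm_triangle.
  - intros a x Ha. simpl. rewrite norm_scal, Rabs_pos_eq; auto.
Qed.
Lemma sub_eq (x y : X) : sub x y = add x (scal (-1) y).
Proof. unfold sub. rewrite n_opp. auto. Qed.
Lemma norm_sub_sym (x y : X) : norm (sub x y) = norm (sub y x).
Proof.
  rewrite !sub_eq. rewrite <- norm_neg. f_equal.
  rewrite scal_distr_l, scal_assoc. replace (-1 * -1) with 1 by ring. rewrite scal_one. apply add_comm.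
Qed.
Lemma norm_rev_tri (x y : X) : Rabs (norm x - norm y) <= norm (sub x y).
Proof.
  assert (E1 : x = add (sub x y) y).
  { rewrite sub_eq, <- add_assoc, (add_comm X (scal (-1) y) y), n_neg1, n_add0r. auto. }
  assert (E2 : y = add (sub y x) x).
  { rewrite sub_eq, <- add_assoc, (add_comm X (scal (-1) x) x), n_neg1, n_add0r. auto. }
  pose proof (norm_triangle X (sub x y) y) as H1. rewrite <- E1 in H1.
  pose proof (norm_triangle X (sub y x) x) as H2. rewrite <- E2 in H2.
  rewrite norm_sub_sym in H2. apply Rabs_le. lra.
Qed.
Lemma sub_triangle (x y z : X) : norm (sub x z) <= norm (sub x y) + norm (sub y z).
Proof.
  assert (E : sub x z = add (sub x y) (sub y z)).
  { rewrite !sub_eq, (add_comm X y (scal (-1) z)), n_ACl, (add_comm X (scal (-1) y) y), n_neg1, n_add0r. auto. }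
  rewrite E. apply norm_triangle.
Qed.
End NormBasics.

Theorem norming (Z : NormedSpace) (z : Z) : exists f : Z -> R,
  dual_elt f /\ (forall y, Rabs (f y) <= norm y) /\ f z = norm z.
Proof.
  destruct (HBpoint (NV Z) (@norm Z) z (norm_sublinear Z)) as [F [Fa [Fs [Fle Fz]]]].
  exists F. simpl in *.
  assert (Hb : forall y, Rabs (F y) <= norm y).
  { intros y. apply Rabs_le. pose proof (Fle (scal (-1) y)). rewrite Fs, norm_neg in H.
    pose proof (Fle y). lra. }
  split; [|split]; auto.
  split. split; auto. exists 1. intros x. rewrite Rmult_1_l. auto.
Qed.

Lemma separation (Z : NormedSpace) (z : Z) : (forall f, dual_elt f -> f z = 0) -> z = zero.
Proof.
  intros H. destruct (norming Z z) as [f [Hf [_ Hz]]]. apply norm_eq_zero. rewrite <- Hz. auto.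
Qed.

Lemma dual_bound {Z : NormedSpace} (f : Z -> R) : dual_elt f -> exists C, 0 <= C /\ forall x, Rabs (f x) <= C * norm x.
Proof.
  intros [_ [C HC]]. exists (Rabs C). split. apply Rabs_pos. intros x.
  eapply Rle_trans. apply HC. apply Rmult_le_compat_r. apply norm_nonneg. apply RRle_abs.
Qed.

Lemma dual_sub {Z : NormedSpace} (f : Z -> R) x y : dual_elt f -> f (sub x y) = f x - f y.
Proof.
  intros [[Fa Fs] _]. rewrite sub_eq, Fa, Fs. ring.
Qed.

Lemma dual_zero {Z : NormedSpace} (f : Z -> R) : dual_elt f -> f zero = 0.
Proof. intros [[Fa Fs] _]. rewrite <- (n_scal0 Z zero), Fs. ring. Qed.

Definition bdd (u : nat -> R) := exists B, forall n, Rabs (u n) <= B.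
Definition BSt := {u : nat -> R | bdd u}.
Lemma bs_eq (a b : BSt) : proj1_sig a = proj1_sig b -> a = b.
Proof. destruct a, b. simpl. intros ->. f_equal. apply proof_irrelevance. Qed.

Lemma bdd_add u v : bdd u -> bdd v -> bdd (fun n => u n + v n).
Proof.
  intros [B1 H1] [B2 H2]. exists (B1 + B2). intros n.
  eapply Rle_trans. apply Rabs_triang. specialize (H1 n). specialize (H2 n). lra.
Qed.
Lemma bdd_scal a u : bdd u -> bdd (fun n => a * u n).
Proof.
  intros [B H]. exists (Rabs a * B). intros n. rewrite Rabs_mult.
  apply Rmult_le_compat_l. apply Rabs_pos. auto.
Qed.
Lemma bdd_0 : bdd (fun _ => 0).
Proof. exists 0. intros. rewrite Rabs_R0. lra. Qed.
Lemma bdd_opp u : bdd u -> bdd (fun n => - u n).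
Proof. intros [B H]. exists B. intros n. rewrite Rabs_Ropp. auto. Qed.

Definition bs0 : BSt := exist _ _ bdd_0.
Definition bsadd (a b : BSt) : BSt := exist _ _ (bdd_add _ _ (proj2_sig a) (proj2_sig b)).
Definition bsopp (a : BSt) : BSt := exist _ _ (bdd_opp _ (proj2_sig a)).
Definition bsscal (r : R) (a : BSt) : BSt := exist _ _ (bdd_scal r _ (proj2_sig a)).

Ltac bs_tac := intros; apply bs_eq; simpl; apply functional_extensionality; intros; ring.

Lemma bs1 : forall x y z, bsadd x (bsadd y z) = bsadd (bsadd x y) z. Proof. bs_tac. Qed.
Lemma bs2 : forall x y, bsadd x y = bsadd y x. Proof. bs_tac. Qed.
Lemma bs3 : forall x, bsadd bs0 x = x. Proof. intros; apply bs_eq; simpl; apply functional_extensionality; intros; ring. Qed.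
Lemma bs4 : forall x, bsadd x (bsopp x) = bs0. Proof. bs_tac. Qed.
Lemma bs5 : forall x, bsscal 1 x = x. Proof. intros; apply bs_eq; simpl; apply functional_extensionality; intros; ring. Qed.
Lemma bs6 : forall a b x, bsscal a (bsscal b x) = bsscal (a * b) x. Proof. bs_tac. Qed.
Lemma bs7 : forall a x y, bsscal a (bsadd x y) = bsadd (bsscal a x) (bsscal a y). Proof. bs_tac. Qed.
Lemma bs8 : forall a b x, bsscal (a + b) x = bsadd (bsscal a x) (bsscal b x). Proof. bs_tac. Qed.

Definition BS : VS := {| vc := BSt; v0 := bs0; vadd := bsadd; vopp := bsopp; vscal := bsscal;
  vadd_assoc := bs1; vadd_comm := bs2; vadd_zero := bs3; vadd_opp := bs4; vscal_one := bs5;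
  vscal_assoc := bs6; vscal_distr_l := bs7; vscal_distr_r := bs8 |}.

Definition evub (u : nat -> R) (M : R) := exists N, forall n, (n >= N)%nat -> u n <= M.
Definition plim (a : BSt) := inf_R (evub (proj1_sig a)).

Lemma plim_glb a : is_glb (evub (proj1_sig a)) (plim a).
Proof.
  apply inf_R_spec. destruct a as [u [B HB]]. simpl. apply glb_exists.
  - exists B. exists O. intros n _. specialize (HB n). apply Rabs_le_between in HB. lra.
  - exists (- B). intros M [N HN]. specialize (HN N (le_n N)). specialize (HB N).
    apply Rabs_le_between in HB. lra.
Qed.
Lemma plim_le a M : evub (proj1_sig a) M -> plim a <= M.
Proof. intros H. apply (proj1 (plim_glb a)). auto. Qed.
Lemma plim_ge a c : (forall M, evub (proj1_sig a) M -> c <= M) -> c <= plim a.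
Proof. intros H. apply (proj2 (plim_glb a)). auto. Qed.

Lemma plim_sublinear : @sublinear BS plim.
Proof.
  split.
  - intros a b. simpl.
    assert (K : forall M1, evub (proj1_sig a) M1 -> plim (bsadd a b) - M1 <= plim b).
    { intros M1 H1. apply plim_ge. intros M2 H2.
      assert (plim (bsadd a b) <= M1 + M2).
      { apply plim_le. destruct H1 as [N1 H1], H2 as [N2 H2]. exists (max N1 N2).
        intros n Hn. simpl. assert (n >= N1)%nat by lia. assert (n >= N2)%nat by lia.
        specialize (H1 n H). specialize (H2 n H0). lra. }
      lra. }
    assert (plim (bsadd a b) - plim b <= plim a).
    { apply plim_ge. intros M HM. specialize (K M HM). lra. }
    lra.
  - intros r a Hr. simpl. destruct (Req_dec r 0) as [->|Hr0].
    + rewrite Rmult_0_l. apply Rle_antisym.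
      * apply plim_le. exists O. intros n _. simpl. lra.
      * apply plim_ge. intros M [N HN]. specialize (HN N (le_n N)). simpl in HN. lra.
    + apply Rle_antisym.
      * assert (plim (bsscal r a) / r <= plim a).
        { apply plim_ge. intros M [N HN]. apply div_le. lra. apply plim_le. exists N.
          intros n Hn. simpl. specialize (HN n Hn). rewrite Rmult_comm. apply Rmult_le_compat_r; lra. }
        apply (Rmult_le_compat_l r) in H; [|lra].
        replace (r * (plim (bsscal r a) / r)) with (plim (bsscal r a)) in H by (field; lra). lra.
      * assert (Hh : r * plim a <= plim (bsscal r a)).
        { apply plim_ge. intros M [N HN].
          assert (plim a <= M / r).
          { apply plim_le. exists N. intros n Hn. specialize (HN n Hn). simpl in HN.
            apply le_div. lra. lra. }
          apply (Rmult_le_compat_l r) in H; [|lra].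
          replace (r * (M / r)) with M in H by (field; lra). lra. }
        lra.
Qed.

Theorem banach_limit : exists L : (nat -> R) -> R,
  (forall u v, bdd u -> bdd v -> L (fun n => u n + v n) = L u + L v) /\
  (forall a u, bdd u -> L (fun n => a * u n) = a * L u) /\
  (forall u B, bdd u -> (forall n, u n <= B) -> L u <= B) /\
  (forall u l, bdd u -> Un_cv u l -> L u = l).
Proof.
  destruct plim_sublinear as [Pa Ps].
  destruct (HB0 BS plim Pa Ps) as [F [Fa [Fs Fle]]]. simpl in *.
  pose (L := fun u => match excluded_middle_informative (bdd u) with
                      | left H => F (exist _ u H) | right _ => 0 end).
  assert (Leq : forall u (H : bdd u), L u = F (exist _ u H)).
  { intros u H. unfold L. destruct (excluded_middle_informative (bdd u)); [|contradiction].
    f_equal; try (apply bs_eq; auto). }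
  assert (Ladd : forall u v, bdd u -> bdd v -> L (fun n => u n + v n) = L u + L v).
  { intros u v Hu Hv. rewrite (Leq _ (bdd_add _ _ Hu Hv)), (Leq u Hu), (Leq v Hv).
    rewrite <- Fa. f_equal; try (apply bs_eq; auto). }
  assert (Lscal : forall a u, bdd u -> L (fun n => a * u n) = a * L u).
  { intros a u Hu. rewrite (Leq _ (bdd_scal a _ Hu)), (Leq u Hu).
    rewrite <- Fs. f_equal; try (apply bs_eq; auto). }
  assert (Lle : forall u B, bdd u -> (forall n, u n <= B) -> L u <= B).
  { intros u B Hu HB. rewrite (Leq u Hu). eapply Rle_trans. apply Fle.
    apply plim_le. exists O. intros. simpl. auto. }
  exists L. split; [|split; [|split]]; auto.
  intros u l Hu Hc.
  assert (Hup : forall eps, 0 < eps -> L u <= l + eps).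
  { intros eps He. destruct (Hc eps He) as [N HN]. rewrite (Leq u Hu). eapply Rle_trans. apply Fle.
    apply plim_le. exists N. intros n Hn. simpl. specialize (HN n Hn). unfold R_dist in HN.
    apply Rabs_def2 in HN. lra. }
  assert (Hlo : forall eps, 0 < eps -> - L u <= - l + eps).
  { intros eps He. destruct (Hc eps He) as [N HN].
    assert (E : - L u = L (fun n => -1 * u n)) by (rewrite Lscal; auto; ring).
    rewrite E, (Leq _ (bdd_scal (-1) u Hu)). eapply Rle_trans. apply Fle.
    apply plim_le. exists N. intros n Hn. simpl. specialize (HN n Hn). unfold R_dist in HN.
    apply Rabs_def2 in HN. lra. }
  apply Rle_antisym; apply le_epsilon; intros eps He.
  - apply Hup; auto.
  - specialize (Hlo eps He). lra.
Qed.

Lemma dual_seq_bdd {X : NormedSpace} (f : X -> R) (v : nat -> X) :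
  dual_elt f -> (forall n, norm (v n) <= 1) -> bdd (fun n => f (v n)).
Proof.
  intros Hf Hv. destruct (dual_bound f Hf) as [C [HC0 HC]]. exists C. intros n.
  eapply Rle_trans. apply HC. specialize (Hv n). pose proof (norm_nonneg X (v n)).
  replace C with (C * 1) at 2 by ring. apply Rmult_le_compat_l; lra.
Qed.

Lemma dual_norm_ub {X : NormedSpace} (f : X -> R) x : dual_elt f -> norm x <= 1 -> Rabs (f x) <= dual_norm f.
Proof.
  intros Hf Hx. unfold dual_norm.
  assert (Hl : is_lub (fun t => exists x : X, norm x <= 1 /\ t = Rabs (f x))
      (sup_R (fun t => exists x : X, norm x <= 1 /\ t = Rabs (f x)))).
  { apply sup_R_spec. apply lub_exists.
    - exists (Rabs (f zero)). exists zero. split; auto. rewrite norm_zero. lra.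
    - destruct (dual_bound f Hf) as [C [HC0 HC]]. exists C. intros t [y [Hy ->]].
      eapply Rle_trans. apply HC. replace C with (C * 1) at 2 by ring.
      pose proof (norm_nonneg X y). apply Rmult_le_compat_l; lra. }
  apply (proj1 Hl). exists x; auto.
Qed.

Theorem cluster (X : NormedSpace) (HXR : reflexive X) (v : nat -> X) :
  (forall n, norm (v n) <= 1) -> exists w, norm w <= 1 /\ forall f, dual_elt f ->
   (forall c, (forall n, c <= f (v n)) -> c <= f w) /\
   (forall c, (forall n, f (v n) <= c) -> f w <= c) /\
   (forall l, Un_cv (fun n => f (v n)) l -> f w = l).
Proof.
  intros Hv. destruct banach_limit as [L [Ladd [Lscal [Lle Lcv]]]].
  pose (phi := fun f : X -> R => L (fun n => f (v n))).
  assert (Lge : forall u c, bdd u -> (forall n, c <= u n) -> c <= L u).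
  { intros u c Hu Hc. assert (L (fun n => -1 * u n) <= - c).
    { apply Lle. apply bdd_scal; auto. intros n. specialize (Hc n). lra. }
    rewrite Lscal in H; auto. lra. }
  destruct (HXR phi) as [w Hw].
  - intros f g Hf Hg. unfold phi. apply Ladd; apply dual_seq_bdd; auto.
  - intros a f Hf. unfold phi. apply Lscal; apply dual_seq_bdd; auto.
  - exists 1. intros f Hf. rewrite Rmult_1_l. apply Rabs_le. unfold phi. split.
    + apply Lge. apply dual_seq_bdd; auto. intros n.
      pose proof (dual_norm_ub f (v n) Hf (Hv n)). apply Rabs_le_between in H. lra.
    + apply Lle. apply dual_seq_bdd; auto. intros n.
      pose proof (dual_norm_ub f (v n) Hf (Hv n)). apply Rabs_le_between in H. lra.
  - exists w. split.
    + destruct (norming X w) as [g [Hg [Hgb Hgw]]]. rewrite <- Hgw, <- Hw by auto. unfold phi.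
      apply Lle. apply dual_seq_bdd; auto. intros n. specialize (Hgb (v n)).
      apply Rabs_le_between in Hgb. specialize (Hv n). lra.
    + intros f Hf. rewrite <- (Hw f Hf). unfold phi. split; [|split].
      * intros c Hc. apply Lge; auto. apply dual_seq_bdd; auto.
      * intros c Hc. apply Lle; auto. apply dual_seq_bdd; auto.
      * intros l Hl. apply Lcv; auto. apply dual_seq_bdd; auto.
Qed.

Lemma seq_choice {A : Type} (P : nat -> A -> Prop) : (forall n, exists x, P n x) -> exists f, forall n, P n (f n).
Proof.
  intros H. exists (fun n => proj1_sig (constructive_indefinite_description _ (H n))).
  intros n. apply (proj2_sig (constructive_indefinite_description _ (H n))).
Qed.

Definition tn (n : nat) := / (INR n + 1).
Lemma tn_pos n : 0 < tn n.
Proof. unfold tn. apply Rinv_0_lt_compat. pose proof (pos_INR n). lra. Qed.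
Lemma tn_le1 n : tn n <= 1.
Proof. unfold tn. rewrite <- Rinv_1. apply Rinv_le_contravar. lra. pose proof (pos_INR n). lra. Qed.
Lemma tn_small eps : 0 < eps -> exists N, forall n, (n >= N)%nat -> tn n < eps.
Proof.
  intros He. destruct (archimed_cor1 eps He) as [N [HN HN0]]. exists N. intros n Hn.
  unfold tn. eapply Rle_lt_trans; [|exact HN]. apply Rinv_le_contravar.
  apply lt_0_INR; lia. apply le_INR in Hn. lra.
Qed.
Lemma tn_mono m n : (m <= n)%nat -> tn n <= tn m.
Proof. intros H. unfold tn. apply Rinv_le_contravar. pose proof (pos_INR m); lra. apply le_INR in H; lra. Qed.

Section Ops.
Variables X Y : NormedSpace.

Lemma BL_zero (A : X -> Y) : bounded_linear A -> A zero = zero.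
Proof. intros [[La Ls] _]. rewrite <- (n_scal0 X zero), Ls, n_scal0. auto. Qed.
Lemma BL_neg (A : X -> Y) x : bounded_linear A -> A (scal (-1) x) = scal (-1) (A x).
Proof. intros [[La Ls] _]. apply Ls. Qed.
Lemma BL_sub (A : X -> Y) x y : bounded_linear A -> A (sub x y) = sub (A x) (A y).
Proof. intros [[La Ls] _]. rewrite !sub_eq, La, Ls. auto. Qed.

Definition opset (A : X -> Y) := fun t => exists x : X, norm x <= 1 /\ t = norm (A x).

Lemma opn_lub (A : X -> Y) : bounded_linear A -> is_lub (opset A) (opnorm A).
Proof.
  intros [_ [C HC]]. apply sup_R_spec. apply lub_exists.
  - exists (norm (A zero)). exists zero. rewrite norm_zero. split; auto; lra.
  - exists (Rabs C). intros t [x [Hx ->]]. eapply Rle_trans. apply HC.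
    pose proof (norm_nonneg X x). pose proof (RRle_abs C).
    destruct (Rle_dec 0 C).
    + replace (Rabs C) with (Rabs C * 1) by ring. apply Rmult_le_compat; lra.
    + assert (C * norm x <= 0) by nra. pose proof (Rabs_pos C). lra.
Qed.
Lemma opn_ub (A : X -> Y) x : bounded_linear A -> norm x <= 1 -> norm (A x) <= opnorm A.
Proof. intros HA Hx. apply (proj1 (opn_lub A HA)). exists x; auto. Qed.
Lemma opn_nonneg (A : X -> Y) : bounded_linear A -> 0 <= opnorm A.
Proof.
  intros HA. eapply Rle_trans. apply (norm_nonneg Y (A zero)). apply opn_ub; auto. rewrite norm_zero; lra.
Qed.
Lemma opn_bound (A : X -> Y) x : bounded_linear A -> norm (A x) <= opnorm A * norm x.
Proof.
  intros HA. destruct (Req_dec (norm x) 0) as [H0|H0].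
  - apply norm_eq_zero in H0. subst x. rewrite BL_zero by auto. rewrite !norm_zero. lra.
  - pose proof (norm_nonneg X x). assert (Hp : 0 < norm x) by lra.
    assert (H1 : norm (A (scal (/ norm x) x)) <= opnorm A).
    { apply opn_ub; auto. rewrite norm_scal, Rabs_pos_eq. rewrite Rinv_l; lra.
      apply Rlt_le, Rinv_0_lt_compat; auto. }
    destruct HA as [[La Ls] _]. rewrite Ls, norm_scal, Rabs_pos_eq in H1.
    2: apply Rlt_le, Rinv_0_lt_compat; auto.
    apply (Rmult_le_compat_l (norm x)) in H1; [|lra].
    rewrite <- Rmult_assoc, Rinv_r, Rmult_1_l in H1 by lra. lra.
Qed.
Lemma opn_approx (A : X -> Y) eps : bounded_linear A -> 0 < eps ->
  exists x, norm x <= 1 /\ opnorm A - eps < norm (A x).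
Proof.
  intros HA He. apply NNPP. intros Hn.
  assert (opnorm A <= opnorm A - eps).
  { apply (proj2 (opn_lub A HA)). intros t [x [Hx ->]]. apply Rnot_lt_le. intros Hl. apply Hn. eauto. }
  lra.
Qed.

Lemma BL_add (A B : X -> Y) : bounded_linear A -> bounded_linear B -> bounded_linear (op_add A B).
Proof.
  intros HA HB.
  assert (bA : forall x, norm (A x) <= opnorm A * norm x) by (intros; apply opn_bound; auto).
  assert (bB : forall x, norm (B x) <= opnorm B * norm x) by (intros; apply opn_bound; auto).
  destruct HA as [[La Ls] _], HB as [[Lb Lsb] _]. unfold op_add. split; [split|].
  - intros x y. rewrite La, Lb. apply n_ACl.
  - intros a x. rewrite Ls, Lsb, scal_distr_l. auto.
  - exists (opnorm A + opnorm B). intros x. eapply Rle_trans. apply norm_triangle.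
    rewrite Rmult_plus_distr_r. apply Rplus_le_compat; [apply bA | apply bB].
Qed.
Lemma BL_scal (A : X -> Y) a : bounded_linear A -> bounded_linear (op_scal a A).
Proof.
  intros HA.
  assert (bA : forall x, norm (A x) <= opnorm A * norm x) by (intros; apply opn_bound; auto).
  destruct HA as [[La Ls] HC]. unfold op_scal. split; [split|].
  - intros x y. rewrite La, scal_distr_l. auto.
  - intros b x. rewrite Ls, !scal_assoc, Rmult_comm. auto.
  - exists (Rabs a * opnorm A). intros x. rewrite norm_scal, Rmult_assoc.
    apply Rmult_le_compat_l. apply Rabs_pos. apply bA.
Qed.

Lemma opn_scal (A : X -> Y) a : bounded_linear A -> opnorm (op_scal a A) = Rabs a * opnorm A.
Proof.
  intros HA. pose proof (BL_scal A a HA) as HaA. apply Rle_antisym.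
  - apply (proj2 (opn_lub _ HaA)). intros t [x [Hx ->]]. unfold op_scal. rewrite norm_scal.
    apply Rmult_le_compat_l. apply Rabs_pos. apply opn_ub; auto.
  - destruct (Req_dec a 0) as [->|Ha].
    + rewrite Rabs_R0, Rmult_0_l. apply opn_nonneg; auto.
    + pose proof (Rabs_pos_lt a Ha).
      assert (opnorm A <= opnorm (op_scal a A) / Rabs a).
      { apply (proj2 (opn_lub _ HA)). intros t [x [Hx ->]]. apply le_div; auto.
        assert (H0 : norm (scal a (A x)) <= opnorm (op_scal a A)) by (apply (opn_ub _ x HaA Hx)).
        rewrite norm_scal in H0. lra. }
      apply (Rmult_le_compat_l (Rabs a)) in H0; [|lra].
      replace (Rabs a * (opnorm (op_scal a A) / Rabs a)) with (opnorm (op_scal a A)) in H0 by (field; lra).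
      lra.
Qed.

Definition rank1 (g : X -> R) (y : Y) : X -> Y := fun x => scal (g x) y.

Lemma rank1_BL g y : dual_elt g -> bounded_linear (rank1 g y).
Proof.
  intros Hg. pose proof (dual_bound g Hg) as [C [HC0 HC]]. destruct Hg as [[Ga Gs] _].
  unfold rank1. split; [split|].
  - intros. rewrite Ga, scal_distr_r. auto.
  - intros. rewrite Gs, scal_assoc. auto.
  - exists (C * norm y). intros x. rewrite norm_scal. specialize (HC x).
    pose proof (norm_nonneg Y y).
    replace (C * norm y * norm x) with (C * norm x * norm y) by ring. apply Rmult_le_compat_r; auto.
Qed.

Lemma rank1_compact g y : dual_elt g -> compact_op (rank1 g y).
Proof.
  intros Hg. split. apply rank1_BL; auto.
  intros u Hu. pose proof (dual_bound g Hg) as [C [HC0 HC]].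
  destruct (Bolzano_Weierstrass (fun n => g (u n)) (fun c => - C <= c <= C) (compact_P3 (- C) C)) as [l Hl].
  { intros n. apply Rabs_le_between. eapply Rle_trans. apply HC.
    replace C with (C * 1) at 2 by ring. apply Rmult_le_compat_l; auto. }
  destruct (extract (fun k n => Rabs (g (u n) - l) < tn k)) as [phi [Hphi Hp]].
  { intros k N. assert (Hpos : 0 < tn k) by apply tn_pos.
    destruct (Hl (disc l (mkposreal _ Hpos)) N) as [p [Hp1 Hp2]].
    - exists (mkposreal _ Hpos). intros x Hx. exact Hx.
    - exists p. split; auto. }
  exists phi, (scal l y). split; auto.
  intros eps He. destruct (tn_small (eps / (norm y + 1))) as [N HN].
  { apply Rdiv_lt_0_compat; auto. pose proof (norm_nonneg Y y). lra. }
  exists N. intros n Hn. unfold R_dist, rank1. rewrite Rminus_0_r, Rabs_pos_eq by apply norm_nonneg.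
  rewrite sub_eq, scal_assoc, <- scal_distr_r, norm_scal.
  replace (g (u (phi n)) + -1 * l) with (g (u (phi n)) - l) by ring.
  specialize (Hp n). specialize (HN n Hn). pose proof (norm_nonneg Y y).
  assert (E1 : Rabs (g (u (phi n)) - l) * norm y <= tn n * norm y) by (apply Rmult_le_compat_r; lra).
  assert (E2 : tn n * norm y <= tn n * (norm y + 1)) by (pose proof (tn_pos n); apply Rmult_le_compat_l; lra).
  assert (E3 : tn n * (norm y + 1) < eps / (norm y + 1) * (norm y + 1)) by (apply Rmult_lt_compat_r; lra).
  assert (E4 : eps / (norm y + 1) * (norm y + 1) = eps) by (field; lra).
  lra.
Qed.
End Ops.

Lemma cv_bound (a b : nat -> R) l : (forall n, Rabs (a n - l) <= b n) -> Un_cv b 0 -> Un_cv a l.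
Proof.
  intros H Hb eps He. destruct (Hb eps He) as [N HN]. exists N. intros n Hn.
  specialize (HN n Hn). unfold R_dist in *. rewrite Rminus_0_r in HN.
  specialize (H n). pose proof (Rle_abs (b n)). lra.
Qed.

Lemma cv_plus0 (a b : nat -> R) : Un_cv a 0 -> Un_cv b 0 -> Un_cv (fun n => a n + b n) 0.
Proof. intros Ha Hb. replace 0 with (0 + 0) by ring. apply CV_plus; auto. Qed.

Lemma cv_scal0 (a : nat -> R) c : Un_cv a 0 -> Un_cv (fun n => c * a n) 0.
Proof. intros Ha. replace 0 with (c * 0) by ring. apply CV_mult; auto. intros eps He. exists O. intros. unfold R_dist. rewrite Rminus_diag, Rabs_R0. auto. Qed.

Lemma tn_cv : Un_cv tn 0.
Proof.
  intros eps He. destruct (tn_small eps He) as [N HN]. exists N. intros n Hn. unfold R_dist.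
  rewrite Rminus_0_r, Rabs_pos_eq by (apply Rlt_le, tn_pos). auto.
Qed.

Lemma cv_norm_sub {Y : NormedSpace} (a : nat -> Y) z :
  Un_cv (fun n => norm (sub (a n) z)) 0 -> Un_cv (fun n => norm (a n)) (norm z).
Proof. intros H. apply (cv_bound _ _ _ (fun n => norm_rev_tri Y (a n) z) H). Qed.

Lemma sub_zero_eq {Y : NormedSpace} (a b : Y) : sub a b = zero -> a = b.
Proof.
  intros H. rewrite sub_eq in H. apply (n_addI Y (scal (-1) b)).
  rewrite (add_comm Y _ a), H, add_comm, n_neg1. auto.
Qed.

Lemma sub_add_add {Y : NormedSpace} (a b c d : Y) : sub (add a b) (add c d) = add (sub a c) (sub b d).
Proof. rewrite !sub_eq, scal_distr_l, n_ACl. auto. Qed.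

Lemma sub_scal_scal {Y : NormedSpace} (a : R) (x y : Y) : sub (scal a x) (scal a y) = scal a (sub x y).
Proof. rewrite !sub_eq, scal_distr_l, !scal_assoc, Rmult_comm. auto. Qed.

Section Ops2.
Variables X Y : NormedSpace.

Lemma compact_add (A B : X -> Y) : compact_op A -> compact_op B -> compact_op (op_add A B).
Proof.
  intros [HA CA] [HB CB]. split. apply BL_add; auto.
  intros u Hu. destruct (CA u Hu) as [phi [y1 [Hphi H1]]].
  destruct (CB (fun n => u (phi n)) (fun n => Hu (phi n))) as [psi [y2 [Hpsi H2]]].
  exists (fun n => phi (psi n)), (add y1 y2). split. apply strict_comp; auto.
  apply (cv_bound _ (fun n => norm (sub (A (u (phi (psi n)))) y1) + norm (sub (B (u (phi (psi n)))) y2))).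
  - intros n. rewrite Rminus_0_r, Rabs_pos_eq by apply norm_nonneg. unfold op_add.
    rewrite sub_add_add. apply norm_triangle.
  - apply cv_plus0; auto. apply (subseq_cv (fun n => norm (sub (A (u (phi n))) y1))); auto.
Qed.

Lemma compact_scal (A : X -> Y) a : compact_op A -> compact_op (op_scal a A).
Proof.
  intros [HA CA]. split. apply BL_scal; auto.
  intros u Hu. destruct (CA u Hu) as [phi [y1 [Hphi H1]]].
  exists phi, (scal a y1). split; auto.
  apply (cv_bound _ (fun n => Rabs a * norm (sub (A (u (phi n))) y1))).
  - intros n. rewrite Rminus_0_r, Rabs_pos_eq by apply norm_nonneg. unfold op_scal.
    rewrite sub_scal_scal, norm_scal. lra.
  - apply cv_scal0; auto.
Qed.

Definition goodS (S : (X -> Y) -> Prop) := (forall A, S A -> bounded_linear A) /\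
  (forall A B, S A -> S B -> S (op_add A B)) /\ (forall a A, S A -> S (op_scal a A)) /\
  (forall g y, dual_elt g -> S (rank1 X Y g y)).

Lemma good_B : goodS (@bounded_linear X Y).
Proof.
  split; [|split; [|split]]; auto.
  - intros. apply BL_add; auto.
  - intros. apply BL_scal; auto.
  - intros. apply rank1_BL; auto.
Qed.
Lemma good_K : goodS (@compact_op X Y).
Proof.
  split; [|split; [|split]].
  - intros A [H _]; auto.
  - intros. apply compact_add; auto.
  - intros. apply compact_scal; auto.
  - intros. apply rank1_compact; auto.
Qed.

Lemma SF_bound S T F : goodS S -> S T -> support_functional S T F -> forall A, S A -> Rabs (F A) <= opnorm A.
Proof.
  intros [SB [Sadd [Sscal SR]]] HT [Fa [Fs [[C HC] [Hsup HFT]]]] A HA.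
  set (E := fun t => exists A, S A /\ opnorm A <= 1 /\ t = Rabs (F A)).
  assert (Hl : is_lub E 1).
  { rewrite <- Hsup. apply sup_R_spec. apply lub_exists.
    - exists (Rabs (F (op_scal 0 T))). exists (op_scal 0 T). split; auto. split; auto.
      rewrite opn_scal, Rabs_R0 by auto. lra.
    - exists (Rabs C). intros t [B [HB [HB1 ->]]]. eapply Rle_trans. apply HC; auto.
      pose proof (opn_nonneg _ _ B (SB B HB)). pose proof (Rle_abs C). pose proof (Rabs_pos C).
      destruct (Rle_dec 0 C). replace (Rabs C) with (Rabs C * 1) by ring. apply Rmult_le_compat; lra.
      nra. }
  destruct Hl as [Hub _].
  pose proof (opn_nonneg _ _ A (SB A HA)) as Ho.
  destruct (Req_dec (opnorm A) 0) as [H0|H0].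
  - rewrite H0. destruct (Req_dec (F A) 0) as [->|HF]. rewrite Rabs_R0; lra. exfalso.
    pose proof (Rabs_pos_lt _ HF).
    set (k := 2 / Rabs (F A)).
    assert (E (Rabs (F (op_scal k A)))).
    { exists (op_scal k A). split; auto. split; auto. rewrite opn_scal, H0 by auto. lra. }
    apply Hub in H1. rewrite Fs, Rabs_mult in H1 by auto. unfold k in H1.
    rewrite Rabs_pos_eq in H1 by (apply Rlt_le, Rdiv_lt_0_compat; lra).
    replace (2 / Rabs (F A) * Rabs (F A)) with 2 in H1 by (field; lra). lra.
  - assert (Hp : 0 < opnorm A) by lra.
    assert (E (Rabs (F (op_scal (/ opnorm A) A)))).
    { exists (op_scal (/ opnorm A) A). split; auto. split; auto.
      rewrite opn_scal, Rabs_pos_eq by (auto; apply Rlt_le, Rinv_0_lt_compat; auto).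
      rewrite Rinv_l; lra. }
    apply Hub in H. rewrite Fs, Rabs_mult, Rabs_pos_eq in H by (auto; apply Rlt_le, Rinv_0_lt_compat; auto).
    apply (Rmult_le_compat_l (opnorm A)) in H; [|lra].
    rewrite <- Rmult_assoc, Rinv_r, Rmult_1_l in H by lra. lra.
Qed.

Lemma ev_support S T x1 g : goodS S -> S T -> 0 < opnorm T -> norm x1 <= 1 -> norm (T x1) = opnorm T ->
  dual_elt g -> (forall y, Rabs (g y) <= norm y) -> g (T x1) = norm (T x1) ->
  support_functional S T (fun A => g (A x1)).
Proof.
  intros [SB [Sadd [Sscal SR]]] HT HTp Hx1 Hatt Hg Hgb HgT.
  destruct Hg as [[Ga Gs] _].
  assert (Bd : forall A, S A -> Rabs (g (A x1)) <= opnorm A).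
  { intros A HA. eapply Rle_trans. apply Hgb. eapply Rle_trans. apply opn_bound. auto.
    pose proof (opn_nonneg _ _ A (SB A HA)). pose proof (norm_nonneg X x1).
    replace (opnorm A) with (opnorm A * 1) at 2 by ring. apply Rmult_le_compat_l; lra. }
  split; [|split; [|split; [|split]]].
  - intros A B _ _. unfold op_add. apply Ga.
  - intros a A _. unfold op_scal. apply Gs.
  - exists 1. intros A HA. rewrite Rmult_1_l. auto.
  - set (E := fun t => exists A, S A /\ opnorm A <= 1 /\ t = Rabs (g (A x1))).
    assert (Hl : is_lub E 1).
    { split.
      - intros t [A [HA [H1 ->]]]. eapply Rle_trans. apply Bd; auto. auto.
      - intros b Hb. apply Hb. exists (op_scal (/ opnorm T) T). split; auto. split.
        + rewrite opn_scal, Rabs_pos_eq by (auto; apply Rlt_le, Rinv_0_lt_compat; auto).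
          rewrite Rinv_l; lra.
        + unfold op_scal. rewrite Gs, HgT, Hatt, Rinv_l, Rabs_R1; lra. }
    apply (lub_unique E); auto. apply sup_R_spec. exists 1; auto.
  - rewrite HgT. auto.
Qed.

Lemma attainer_norm1 (T : X -> Y) x : bounded_linear T -> 0 < opnorm T -> norm x <= 1 -> norm (T x) = opnorm T -> norm x = 1.
Proof.
  intros HT Hp Hx Ha. pose proof (opn_bound _ _ T x HT). rewrite Ha in H.
  assert (1 <= norm x).
  { apply (Rmult_le_reg_l (opnorm T)); auto. lra. }
  lra.
Qed.

Lemma dual_comp (g : Y -> R) (T : X -> Y) : dual_elt g -> bounded_linear T -> dual_elt (fun x => g (T x)).
Proof.
  intros Hg HT. pose proof (dual_bound g Hg) as [C [HC0 HC]]. destruct Hg as [[Ga Gs] _].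
  pose proof HT as [[Ta Ts] _]. split. split.
  - intros. rewrite Ta, Ga. auto.
  - intros. rewrite Ts, Gs. auto.
  - exists (C * opnorm T). intros x. eapply Rle_trans. apply HC. rewrite Rmult_assoc.
    apply Rmult_le_compat_l; auto. apply opn_bound; auto.
Qed.

Lemma cluster_T (HXR : reflexive X) (T : X -> Y) (v : nat -> X) z : bounded_linear T ->
  (forall n, norm (v n) <= 1) -> Un_cv (fun n => norm (sub (T (v n)) z)) 0 ->
  exists w, norm w <= 1 /\ T w = z /\ forall f, dual_elt f ->
   (forall c, (forall n, c <= f (v n)) -> c <= f w) /\
   (forall c, (forall n, f (v n) <= c) -> f w <= c).
Proof.
  intros HT Hv Hc. destruct (cluster X HXR v Hv) as [w [Hw Hf]]. exists w. split; auto. split.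
  - apply sub_zero_eq. apply separation. intros g Hg.
    rewrite dual_sub by auto. apply Rminus_diag_eq.
    destruct (Hf _ (dual_comp g T Hg HT)) as [_ [_ Hl]]. apply Hl.
    destruct (dual_bound g Hg) as [C [HC0 HC]].
    apply (cv_bound _ (fun n => C * norm (sub (T (v n)) z))).
    + intros n. rewrite <- dual_sub by auto. apply HC.
    + apply cv_scal0; auto.
  - intros f Hff. destruct (Hf f Hff) as [A [B _]]. split; auto.
Qed.

Lemma attain (HXR : reflexive X) (T : X -> Y) : compact_op T ->
  exists x0, norm x0 <= 1 /\ norm (T x0) = opnorm T.
Proof.
  intros [HT CT].
  destruct (seq_choice (fun n x => norm x <= 1 /\ opnorm T - tn n < norm (T x))) as [x Hx].
  { intros n. apply opn_approx; auto. apply tn_pos. }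
  destruct (CT x (fun n => proj1 (Hx n))) as [phi [z [Hphi Hz]]].
  destruct (cluster_T HXR T (fun n => x (phi n)) z HT (fun n => proj1 (Hx (phi n))) Hz) as [w [Hw [HTw _]]].
  exists w. split; auto. rewrite HTw.
  apply (UL_sequence (fun n => norm (T (x (phi n))))).
  - apply cv_norm_sub; auto.
  - apply (subseq_cv (fun n => norm (T (x n)))); auto.
    apply (cv_bound _ tn). 2: apply tn_cv.
    intros n. destruct (Hx n) as [H1 H2]. pose proof (opn_ub _ _ T (x n) HT H1).
    rewrite Rabs_left1 by lra. lra.
Qed.
End Ops2.

Definition normings {Y : NormedSpace} (g : Y -> R) (y : Y) :=
  dual_elt g /\ (forall z, Rabs (g z) <= norm z) /\ g y = norm y.

Definition smoothY {Y : NormedSpace} (y0 : Y) :=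
  forall g1 g2, normings g1 y0 -> normings g2 y0 -> forall z, g1 z = g2 z.

Definition DY {Y : NormedSpace} (y0 : Y) (u : Y) : R := dd (NV Y) (@norm Y) y0 u.

Lemma scal_m1_m1 {Y : NormedSpace} (x : Y) : scal (-1) (scal (-1) x) = x.
Proof. rewrite scal_assoc. replace (-1 * -1) with 1 by ring. apply scal_one. Qed.

Lemma YS {Y : NormedSpace} (y0 : Y) : smoothY y0 -> forall u, DY y0 (scal (-1) u) = - DY y0 u.
Proof.
  intros Hs u. destruct (norm_sublinear Y) as [Pa Ps].
  assert (Dsub : @sublinear (NV Y) (DY y0)).
  { split. intros; apply (dd_add (NV Y) norm Pa Ps). intros; apply (dd_hom (NV Y) norm Pa Ps); auto. }
  assert (Hnorming : forall F : Y -> R, (forall x z, F (add x z) = F x + F z) ->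
      (forall a x, F (scal a x) = a * F x) -> (forall x, F x <= DY y0 x) -> normings F y0).
  { intros F Fa Fs Fle.
    assert (Fn : forall x, F x <= norm x) by (intros; eapply Rle_trans; [apply Fle | apply (dd_le_p (NV Y) norm Pa Ps)]).
    assert (Fb : forall z, Rabs (F z) <= norm z).
    { intros z. apply Rabs_le. pose proof (Fn (scal (-1) z)). rewrite Fs, norm_neg in H. pose proof (Fn z). lra. }
    split; [|split]; auto.
    - split. split; auto. exists 1. intros; rewrite Rmult_1_l; auto.
    - apply Rle_antisym.
      + apply Fn.
      + pose proof (Fle (scal (-1) y0)). unfold DY in H. rewrite (dd_my (NV Y) norm Pa Ps) in H.
        rewrite Fs in H. lra. }
  destruct (HBpoint (NV Y) (DY y0) u Dsub) as [F1 [F1a [F1s [F1le F1u]]]].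
  destruct (HBpoint (NV Y) (DY y0) (scal (-1) u) Dsub) as [F2 [F2a [F2s [F2le F2u]]]].
  simpl in *.
  pose proof (Hs F1 F2 (Hnorming F1 F1a F1s F1le) (Hnorming F2 F2a F2s F2le)) as E.
  rewrite <- F2u, F2s, <- E, F1u. ring.
Qed.

Section Main.
Variables X Y : NormedSpace.

Definition Qcond (T : X -> Y) := exists x0, norm x0 <= 1 /\ norm (T x0) = opnorm T /\
  (forall x, norm x <= 1 -> norm (T x) = opnorm T -> x = x0 \/ x = scal (-1) x0) /\
  smoothY (T x0).

Lemma opnorm_pos (T : X -> Y) : bounded_linear T -> (exists x, T x <> zero) -> 0 < opnorm T.
Proof.
  intros HT [x Hx]. pose proof (opn_nonneg _ _ T HT). pose proof (opn_bound _ _ T x HT).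
  pose proof (norm_nonneg Y (T x)). pose proof (norm_nonneg X x).
  destruct (Req_dec (norm (T x)) 0) as [E|E]. apply norm_eq_zero in E. contradiction.
  destruct (Req_dec (opnorm T) 0) as [E2|E2]. rewrite E2 in H0. lra. lra.
Qed.

Theorem smooth_Q (HXR : reflexive X) (T : X -> Y) (S : (X -> Y) -> Prop) :
  compact_op T -> goodS X Y S -> smooth_in S T -> Qcond T.
Proof.
  intros HTc HS [HST [Hx [_ Huniq]]].
  pose proof HS as [SB [Sadd [Sscal SR]]].
  assert (HT : bounded_linear T) by (apply SB; auto).
  assert (Hp : 0 < opnorm T) by (apply opnorm_pos; auto).
  destruct (attain X Y HXR T HTc) as [x0 [Hx0 Hatt0]].
  exists x0. split; [|split; [|split]]; auto.
  - intros x1 Hx1 Hatt1.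
    destruct (norming Y (T x0)) as [g0 [Hg0 [Hg0b Hg0x]]].
    destruct (norming Y (T x1)) as [g1 [Hg1 [Hg1b Hg1x]]].
    pose proof (ev_support X Y S T x0 g0 HS HST Hp Hx0 Hatt0 Hg0 Hg0b Hg0x) as F0.
    pose proof (ev_support X Y S T x1 g1 HS HST Hp Hx1 Hatt1 Hg1 Hg1b Hg1x) as F1.
    pose proof (Huniq _ _ F0 F1) as E. simpl in E.
    set (lam := g1 (T x0) / opnorm T).
    assert (Eh : forall h, dual_elt h -> h x0 = lam * h x1).
    { intros h Hh. specialize (E (rank1 X Y h (T x0)) (SR h (T x0) Hh)). unfold rank1 in E.
      destruct Hg0 as [[_ G0s] _], Hg1 as [[_ G1s] _]. rewrite G0s, G1s, Hg0x, Hatt0 in E.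
      unfold lam. apply (Rmult_eq_reg_r (opnorm T)); [|lra]. rewrite E. field. lra. }
    assert (Ex : x0 = scal lam x1).
    { apply sub_zero_eq, separation. intros h Hh. rewrite dual_sub by auto.
      destruct Hh as [[Ha Hs] Hb]. rewrite Hs, <- Eh by (split; [split|]; auto). ring. }
    pose proof (attainer_norm1 X Y T x0 HT Hp Hx0 Hatt0) as N0.
    pose proof (attainer_norm1 X Y T x1 HT Hp Hx1 Hatt1) as N1.
    rewrite Ex, norm_scal, N1 in N0.
    assert (Hl : lam = 1 \/ lam = -1).
    { revert N0. unfold Rabs. destruct (Rcase_abs lam); intros; lra. }
    destruct Hl as [Hl|Hl]; rewrite Hl in Ex.
    + left. rewrite Ex, scal_one. auto.
    + right. rewrite Ex, scal_m1_m1. auto.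
  - intros g1 g2 [Hg1 [Hg1b Hg1x]] [Hg2 [Hg2b Hg2x]] y.
    pose proof (ev_support X Y S T x0 g1 HS HST Hp Hx0 Hatt0 Hg1 Hg1b Hg1x) as F1.
    pose proof (ev_support X Y S T x0 g2 HS HST Hp Hx0 Hatt0 Hg2 Hg2b Hg2x) as F2.
    pose proof (Huniq _ _ F1 F2) as E. simpl in E.
    destruct (norming X x0) as [h [Hh [_ Hhx]]].
    specialize (E (rank1 X Y h y) (SR h y Hh)). unfold rank1 in E.
    destruct Hg1 as [[_ G1s] _], Hg2 as [[_ G2s] _]. rewrite G1s, G2s, Hhx in E.
    rewrite (attainer_norm1 X Y T x0 HT Hp Hx0 Hatt0) in E. lra.
Qed.
End Main.

Lemma not_cv_ex u l : ~ Un_cv u l -> exists eps, 0 < eps /\ forall N, exists n, (n >= N)%nat /\ eps <= Rabs (u n - l).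
Proof.
  intros H. unfold Un_cv in H. apply not_all_ex_not in H. destruct H as [eps H].
  apply imply_to_and in H. destruct H as [He H]. exists eps. split; [lra|].
  intros N. apply NNPP. intros Hn. apply H. exists N. intros n Hn'. unfold R_dist.
  apply Rnot_le_lt. intros Hl. apply Hn. eauto.
Qed.

Lemma side_split u l eps : (forall N, exists n, (n >= N)%nat /\ eps <= Rabs (u n - l)) ->
  (forall N, exists n, (n >= N)%nat /\ l + eps <= u n) \/ (forall N, exists n, (n >= N)%nat /\ u n <= l - eps).
Proof.
  intros H. destruct (classic (forall N, exists n, (n >= N)%nat /\ l + eps <= u n)) as [H1|H1]; [left; auto|right].
  apply not_all_ex_not in H1. destruct H1 as [N0 H1]. intros N.
  destruct (H (max N N0)) as [n [Hn Hu]]. exists n. split. lia.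
  assert (~ (l + eps <= u n)) by (intros Hc; apply H1; exists n; split; [lia|auto]).
  revert Hu. unfold Rabs. destruct (Rcase_abs (u n - l)); intros; lra.
Qed.

Lemma cv_abs0 u l : Un_cv u l -> Un_cv (fun n => Rabs (u n - l)) 0.
Proof.
  intros H eps He. destruct (H eps He) as [N HN]. exists N. intros n Hn. unfold R_dist in *.
  rewrite Rminus_0_r, Rabs_Rabsolu. auto.
Qed.

Lemma sub_neg_x0 {X : NormedSpace} (a x0 : X) : norm (sub (scal (-1) a) x0) = norm (sub a (scal (-1) x0)).
Proof.
  rewrite <- (norm_neg X (sub a (scal (-1) x0))). f_equal.
  rewrite !sub_eq, scal_distr_l, scal_m1_m1. auto.
Qed.

Section NA.
Variables X Y : NormedSpace.
Hypothesis HXR : reflexive X.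
Hypothesis HXK : kadets_klee X.
Variable T : X -> Y.
Hypothesis HTc : compact_op T.
Variable x0 : X.
Hypothesis Hx0 : norm x0 <= 1.
Hypothesis Hatt0 : norm (T x0) = opnorm T.
Hypothesis Huniq0 : forall x, norm x <= 1 -> norm (T x) = opnorm T -> x = x0 \/ x = scal (-1) x0.
Hypothesis Hp : 0 < opnorm T.

Lemma near_attain (x : nat -> X) : (forall n, norm (x n) <= 1) ->
  Un_cv (fun n => norm (T (x n))) (opnorm T) ->
  exists phi (w : nat -> X), (forall k, (phi k < phi (S k))%nat) /\
    (forall k, w k = x (phi k) \/ w k = scal (-1) (x (phi k))) /\
    Un_cv (fun k => norm (sub (w k) x0)) 0.
Proof.
  intros Hx Hcv. pose proof HTc as [HT CT].
  destruct (CT x Hx) as [phi [z [Hphi Hz]]].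
  set (v := fun n => x (phi n)).
  assert (Hv : forall n, norm (v n) <= 1) by (intros; apply Hx).
  assert (Hcvv : Un_cv (fun n => norm (T (v n))) (opnorm T)) by (apply (subseq_cv (fun n => norm (T (x n)))); auto).
  assert (Hnz : norm z = opnorm T).
  { apply (UL_sequence (fun n => norm (T (v n)))); auto. apply cv_norm_sub; auto. }
  assert (Att : forall w, norm w <= 1 -> T w = z -> w = x0 \/ w = scal (-1) x0).
  { intros w Hw Hz'. apply Huniq0; auto. rewrite Hz'. auto. }
  destruct (cluster_T X Y HXR T v z HT Hv Hz) as [w0 [Hw0 [HTw0 _]]].
  assert (Same : forall w, norm w <= 1 -> T w = z -> w = w0).
  { intros w Hw HTw.
    assert (Bad : forall a b, b = scal (-1) a -> T a = z -> T b = z -> False).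
    { intros a b -> Ha Hb. rewrite BL_neg, Ha in Hb by auto.
      assert (E : norm (sub z (scal (-1) z)) = 0) by (rewrite Hb at 1; rewrite sub_eq, n_neg1; apply norm_zero).
      rewrite sub_eq, scal_m1_m1 in E.
      replace (add z z) with (scal (1 + 1) z) in E by (rewrite scal_distr_r, scal_one; auto).
      rewrite norm_scal in E. rewrite Rabs_pos_eq in E by lra. lra. }
    destruct (Att w Hw HTw) as [E1|E1]; destruct (Att w0 Hw0 HTw0) as [E2|E2]; subst; auto.
    - exfalso. apply (Bad x0 (scal (-1) x0)); auto.
    - exfalso. apply (Bad (scal (-1) x0) x0); auto. rewrite scal_m1_m1; auto. }
  assert (Hweak : weak_cv v w0).
  { intros f Hf. apply NNPP. intros Hn. destruct (not_cv_ex _ _ Hn) as [eps [He HN]].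
    destruct (side_split _ _ _ HN) as [H1|H1].
    - destruct (extract (fun _ n => f w0 + eps <= f (v n))) as [psi [Hpsi Hps]].
      { intros _ N. apply H1. }
      destruct (cluster_T X Y HXR T (fun n => v (psi n)) z HT (fun n => Hv (psi n))) as [w [Hw [HTw Hc]]].
      { apply (subseq_cv (fun n => norm (sub (T (v n)) z))); auto. }
      destruct (Hc f Hf) as [Hlow _]. specialize (Hlow (f w0 + eps) Hps).
      rewrite (Same w Hw HTw) in Hlow. lra.
    - destruct (extract (fun _ n => f (v n) <= f w0 - eps)) as [psi [Hpsi Hps]].
      { intros _ N. apply H1. }
      destruct (cluster_T X Y HXR T (fun n => v (psi n)) z HT (fun n => Hv (psi n))) as [w [Hw [HTw Hc]]].
      { apply (subseq_cv (fun n => norm (sub (T (v n)) z))); auto. }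
      destruct (Hc f Hf) as [_ Hup]. specialize (Hup (f w0 - eps) Hps).
      rewrite (Same w Hw HTw) in Hup. lra. }
  assert (Hn1 : norm w0 = 1).
  { apply (attainer_norm1 X Y T w0 HT Hp Hw0). rewrite HTw0. auto. }
  assert (Hnorm : Un_cv (fun n => norm (v n)) (norm w0)).
  { rewrite Hn1. apply (cv_bound _ (fun n => / opnorm T * Rabs (norm (T (v n)) - opnorm T))).
    - intros n. pose proof (opn_bound _ _ T (v n) HT). specialize (Hv n).
      rewrite Rabs_left1 by lra. apply (Rmult_le_reg_l (opnorm T)); auto.
      rewrite <- Rmult_assoc, Rinv_r, Rmult_1_l by lra.
      rewrite Rabs_left1; [nra|]. pose proof (opn_ub _ _ T (v n) HT Hv). lra.
    - apply cv_scal0. apply cv_abs0. auto. }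
  pose proof (HXK v w0 Hweak Hnorm) as Hstrong.
  destruct (Att w0 Hw0 HTw0) as [E|E].
  - exists phi, v. split; [|split]; auto. subst w0. auto.
  - exists phi, (fun k => scal (-1) (v k)). split; [|split]; auto.
    eapply (cv_bound _ (fun n => norm (sub (v n) w0))).
    + intros n. rewrite Rminus_0_r, sub_neg_x0, <- E. rewrite Rabs_pos_eq by apply norm_nonneg. lra.
    + apply (cv_bound _ (fun n => norm (sub (v n) w0))); auto.
      intros n. rewrite Rminus_0_r, Rabs_pos_eq by apply norm_nonneg. lra.
Qed.
End NA.

Lemma vid1 {Y : NormedSpace} (a b c : Y) t : add a (scal t b) = add (add a (scal t c)) (scal t (sub b c)).
Proof.
  rewrite sub_eq, scal_distr_l, scal_assoc, <- add_assoc. f_equal.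
  rewrite (add_comm Y (scal t b)), add_assoc, <- scal_distr_r.
  replace (t + t * -1) with 0 by ring. rewrite n_scal0, add_zero. auto.
Qed.

Section KEY.
Variables X Y : NormedSpace.
Hypothesis HXR : reflexive X.
Hypothesis HXK : kadets_klee X.
Variable T : X -> Y.
Hypothesis HTc : compact_op T.
Variable S : (X -> Y) -> Prop.
Hypothesis HS : goodS X Y S.
Hypothesis HST : S T.
Variable x0 : X.
Hypothesis Hx0 : norm x0 <= 1.
Hypothesis Hatt0 : norm (T x0) = opnorm T.
Hypothesis Huniq0 : forall x, norm x <= 1 -> norm (T x) = opnorm T -> x = x0 \/ x = scal (-1) x0.
Hypothesis Hp : 0 < opnorm T.

Lemma key F A : support_functional S T F -> S A -> F A <= DY (T x0) (A x0).
Proof.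
  intros HF HA. pose proof HS as [SB [Sadd [Sscal SR]]].
  pose proof HF as [Fa [Fs [_ [_ FT]]]].
  assert (HT : bounded_linear T) by auto. assert (HAb : bounded_linear A) by auto.
  assert (HoA : 0 <= (opnorm A)) by (apply opn_nonneg; auto).
  destruct (norm_sublinear Y) as [Pa Ps].
  unfold DY. apply (dd_ge (NV Y) norm Pa Ps). intros s Hs. unfold qd. simpl.
  set (Q := (norm (add (T x0) (scal s (A x0))) - norm (T x0)) / s).
  apply le_epsilon. intros eps He.
  set (Bt := fun n => op_add T (op_scal (tn n) A)).
  assert (SBt : forall n, S (Bt n)) by (intros; apply Sadd; auto).
  assert (BBt : forall n, bounded_linear (Bt n)) by auto.
  destruct (seq_choice (fun n x => norm x <= 1 /\ opnorm (Bt n) - tn n * tn n < norm (Bt n x))) as [x Hx].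
  { intros n. apply opn_approx; auto. pose proof (tn_pos n). nra. }
  assert (FB : forall n, (opnorm T) + tn n * F A <= opnorm (Bt n)).
  { intros n. assert (E : F (Bt n) = (opnorm T) + tn n * F A).
    { unfold Bt. rewrite Fa, Fs, FT; auto. }
    rewrite <- E. eapply Rle_trans. apply Rle_abs. apply (SF_bound X Y S T F HS HST HF); auto. }
  set (K := Rabs (F A) + 1 + (opnorm A)).
  assert (Hcv : Un_cv (fun n => norm (T (x n))) (opnorm T)).
  { apply (cv_bound _ (fun n => K * tn n)).
    - intros n. destruct (Hx n) as [Hx1 Hx2]. specialize (FB n).
      pose proof (opn_ub _ _ T (x n) HT Hx1) as U.
      assert (L1 : norm (Bt n (x n)) <= norm (T (x n)) + tn n * (opnorm A)).
      { unfold Bt, op_add, op_scal. eapply Rle_trans. apply norm_triangle.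
        rewrite norm_scal, Rabs_pos_eq by (apply Rlt_le, tn_pos).
        pose proof (opn_ub _ _ A (x n) HAb Hx1). pose proof (tn_pos n).
        apply Rplus_le_compat_l. apply Rmult_le_compat_l; lra. }
      pose proof (tn_pos n). pose proof (tn_le1 n).
      assert (L2 : - (tn n * Rabs (F A)) <= tn n * F A).
      { pose proof (Rabs_le_between (F A) (Rabs (F A)) (Rle_refl _)). nra. }
      assert (L3 : tn n * tn n <= tn n * 1) by (apply Rmult_le_compat_l; lra).
      rewrite Rabs_left1 by (lra). unfold K. nra.
    - apply cv_scal0, tn_cv. }
  destruct (near_attain X Y HXR HXK T HTc x0 Huniq0 Hp x (fun n => proj1 (Hx n)) Hcv)
    as [phi [w [Hphi [Hw Hwcv]]]].
  set (K2 := 2 / s * ((opnorm T) + norm (A x0)) + (opnorm A) + 1).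
  assert (HK2 : 0 < K2).
  { unfold K2. pose proof (norm_nonneg Y (A x0)). assert (0 <= 2 / s * ((opnorm T) + norm (A x0))).
    { apply Rmult_le_pos. apply Rlt_le, Rdiv_lt_0_compat; lra. lra. } lra. }
  set (eta := Rmin 1 (eps / K2)).
  assert (Heta : 0 < eta) by (unfold eta; apply Rmin_glb_lt; [lra | apply Rdiv_lt_0_compat; lra]).
  assert (Heta2 : eta * K2 <= eps).
  { unfold eta. pose proof (Rmin_r 1 (eps / K2)).
    apply Rle_trans with (eps / K2 * K2). apply Rmult_le_compat_r; lra. right; field; lra. }
  destruct (Hwcv eta Heta) as [N1 HN1].
  destruct (tn_small eta Heta) as [N2 HN2].
  set (k := max N1 N2).
  assert (Hd : norm (sub (w k) x0) < eta).
  { specialize (HN1 k ltac:(unfold k; lia)). unfold R_dist in HN1.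
    rewrite Rminus_0_r, Rabs_pos_eq in HN1 by apply norm_nonneg. auto. }
  set (t := tn (phi k)).
  assert (Ht : 0 < t) by apply tn_pos.
  assert (Hteta : t < eta).
  { unfold t. pose proof (strict_ge phi Hphi k). eapply Rle_lt_trans. apply tn_mono. exact H.
    apply HN2. unfold k; lia. }
  set (xk := x (phi k)). set (wk := w k). set (delta := norm (sub wk x0)).
  assert (Hxk : norm xk <= 1) by (apply Hx).
  assert (Hwk : norm wk <= 1 /\ norm (Bt (phi k) wk) = norm (Bt (phi k) xk)).
  { destruct (Hw k) as [E|E]; unfold wk; rewrite E; split; auto.
    - rewrite norm_neg. auto.
    - rewrite BL_neg, norm_neg; auto. }
  destruct Hwk as [Hwk1 Hwk2].
  set (v := add (T wk) (scal t (A x0))).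
  destruct (norming Y v) as [g [Hg [Hgb Hgv]]].
  pose proof Hg as [[Ga Gs] _].
  set (e1 := norm (sub v (T x0))).
  assert (F1 : (opnorm T) + t * F A < norm v + t * ((opnorm A) * delta) + t * t).
  { pose proof (FB (phi k)) as H1. destruct (Hx (phi k)) as [_ H2]. fold t xk in H1, H2.
    assert (E : Bt (phi k) wk = add v (scal t (sub (A wk) (A x0)))).
    { unfold Bt, op_add, op_scal, v. apply vid1. }
    assert (E2 : norm (Bt (phi k) wk) <= norm v + t * ((opnorm A) * delta)).
    { rewrite E. eapply Rle_trans. apply norm_triangle. apply Rplus_le_compat_l.
      rewrite norm_scal, Rabs_pos_eq by lra. apply Rmult_le_compat_l; [lra|].
      rewrite <- BL_sub by auto. apply opn_bound; auto. }
    lra. }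
  assert (F3 : norm v <= (opnorm T) + t * g (A x0)).
  { rewrite <- Hgv. unfold v. rewrite Ga, Gs. apply Rplus_le_compat_r.
    eapply Rle_trans. apply Rle_abs. eapply Rle_trans. apply Hgb. apply opn_ub; auto. }
  assert (A1 : F A < g (A x0) + (opnorm A) * delta + t).
  { apply (Rmult_lt_reg_l t); auto. nra. }
  assert (A2 : g (A x0) <= Q + 2 / s * e1).
  { assert (G1 : g (T x0) + s * g (A x0) <= norm (add (T x0) (scal s (A x0)))).
    { rewrite <- Gs, <- Ga. eapply Rle_trans. apply Rle_abs. apply Hgb. }
    assert (G2 : g (T x0) >= norm (T x0) - 2 * e1).
    { assert (E : g (T x0) = g v - g (sub v (T x0))) by (rewrite dual_sub by auto; ring).
      pose proof (Hgb (sub v (T x0))). apply Rabs_le_between in H. fold e1 in H.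
      pose proof (norm_rev_tri Y v (T x0)). apply Rabs_le_between in H0. fold e1 in H0. lra. }
    assert (g (A x0) <= (norm (add (T x0) (scal s (A x0))) - norm (T x0) + 2 * e1) / s).
    { apply le_div; lra. }
    unfold Q. replace ((norm (add (T x0) (scal s (A x0))) - norm (T x0)) / s + 2 / s * e1)
      with ((norm (add (T x0) (scal s (A x0))) - norm (T x0) + 2 * e1) / s) by (field; lra). auto. }
  assert (A3 : e1 <= (opnorm T) * delta + t * norm (A x0)).
  { unfold e1, v. assert (E : sub (add (T wk) (scal t (A x0))) (T x0) = add (sub (T wk) (T x0)) (scal t (A x0))).
    { rewrite !sub_eq, <- !add_assoc. f_equal. apply add_comm. }
    rewrite E. eapply Rle_trans. apply norm_triangle. rewrite norm_scal, Rabs_pos_eq by lra.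
    apply Rplus_le_compat_r. rewrite <- BL_sub by auto. apply opn_bound; auto. }
  assert (Hs2 : 0 < 2 / s) by (apply Rdiv_lt_0_compat; lra).
  assert (A4 : 2 / s * e1 <= 2 / s * ((opnorm T) * delta + t * norm (A x0))) by (apply Rmult_le_compat_l; lra).
  assert (Hdel : 0 <= delta) by (unfold delta; apply norm_nonneg).
  assert (Hd' : delta <= eta) by (unfold delta, wk; lra).
  pose proof (norm_nonneg Y (A x0)) as Hu.
  assert (A5a : (opnorm A) * delta <= (opnorm A) * eta) by (apply Rmult_le_compat_l; lra).
  assert (A5b : (opnorm T) * delta <= (opnorm T) * eta) by (apply Rmult_le_compat_l; lra).
  assert (A5c : t * norm (A x0) <= eta * norm (A x0)) by (apply Rmult_le_compat_r; lra).
  assert (A6 : 2 / s * ((opnorm T) * delta + t * norm (A x0)) <= 2 / s * ((opnorm T) * eta + eta * norm (A x0))) by (apply Rmult_le_compat_l; lra).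
  assert (A7 : 2 / s * ((opnorm T) * eta + eta * norm (A x0)) + (opnorm A) * eta + eta = eta * K2) by (unfold K2; ring).
  lra.
Qed.
End KEY.

Theorem Q_smooth (X Y : NormedSpace) (HXR : reflexive X) (HXK : kadets_klee X) (T : X -> Y)
  (S : (X -> Y) -> Prop) : compact_op T -> goodS X Y S -> S T -> (exists x, T x <> zero) ->
  Qcond X Y T -> smooth_in S T.
Proof.
  intros HTc HS HST Hx (x0 & Hx0 & Hatt0 & Huniq0 & Hsm).
  pose proof HS as [SB [Sadd [Sscal SR]]].
  assert (HT : bounded_linear T) by auto.
  assert (Hp : 0 < opnorm T) by (apply opnorm_pos; auto).
  assert (Det : forall F A, support_functional S T F -> S A -> F A = DY (T x0) (A x0)).
  { intros F A HF HA. apply Rle_antisym.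
    - apply (key X Y HXR HXK T HTc S HS HST x0 Hatt0 Huniq0 Hp); auto.
    - pose proof (key X Y HXR HXK T HTc S HS HST x0 Hatt0 Huniq0 Hp F (op_scal (-1) A) HF (Sscal _ _ HA)) as H.
      unfold op_scal at 2 in H. rewrite (YS (T x0) Hsm) in H.
      pose proof HF as [_ [Fs _]]. rewrite Fs in H by auto. lra. }
  split; [|split; [|split]]; auto.
  - destruct (norming Y (T x0)) as [g [Hg [Hgb Hgx]]].
    exists (fun A => g (A x0)). apply ev_support; auto.
  - intros f g Hf Hg A HA. rewrite (Det f A Hf HA), (Det g A Hg HA). auto.
Qed.

Theorem theorem3p5 (X Y : NormedSpace)
  (HXB : banach X) (HXR : reflexive X) (HXK : kadets_klee X)
  (T : X -> Y) (HT : compact_op T) :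
  smooth_in (@bounded_linear X Y) T <-> smooth_in (@compact_op X Y) T.
Proof.
  split.
  - intros H. pose proof (smooth_Q X Y HXR T _ HT (good_B X Y) H) as Q.
    destruct H as [_ [Hx _]].
    apply Q_smooth; auto. apply good_K.
  - intros H. pose proof (smooth_Q X Y HXR T _ HT (good_K X Y) H) as Q.
    destruct H as [_ [Hx _]].
    apply Q_smooth; auto. apply good_B. destruct HT; auto.
Qed.
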